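(* There exist polynomials $P_0(z),P_1(z),P_2(z),\dots$ with $\deg P_{n-1}\le n$ for every $n\ge1$ such that for each integer $N\ge0$ \[ \frac{\operatorname{ali}(e^x)}{x e^x}=1+\sum_{n=1}^N\frac{P_{n-1}(\log x)}{x^n}+O\Bigl(\frac{\log^{N+1}x}{x^{N+1}}\Bigr),\qquad (x\to+\infty), \] where for $N=0$ the sum is understood to be $0$.
   Context: For real $x>1$, $\operatorname{li}(x)=\mathrm{p.v.}\int_0^x\frac{dt}{\log t}$; $\operatorname{li}$ is a strictly increasing bijection from $(1,+\infty)$ onto $\mathbb{R}$, and $\operatorname{ali}\colon\mathbb{R}\to(1,+\infty)$ denotes its inverse function, i.e. $\operatorname{li}(\operatorname{ali}(x))=x$. *)

(* Defs.v *)
From Stdlib Require Import Reals.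
From Coquelicot Require Import Coquelicot.
Open Scope R_scope.

(* Principal value integral li(x) = p.v. \int_0^x dt / log t, for x > 1:
   is_li x l  <->  lim_{eps -> 0+} ( \int_0^{1-eps} dt/log t + \int_{1+eps}^x dt/log t ) = l. *)
Definition is_li (x l : R) : Prop :=
  filterlim
    (fun eps : R => RInt (fun t => / ln t) 0 (1 - eps) + RInt (fun t => / ln t) (1 + eps) x)
    (at_right 0) (locally l).

Definition is_ali (ali : R -> R) : Prop :=
  forall y : R, 1 < ali y /\ is_li (ali y) y.

(* Polynomial P_m(y) = \sum_{k=0}^{m+1} a m k * y^k, of degree <= m+1. *)
Definition polyP (a : nat -> nat -> R) (m : nat) (y : R) : R :=
  sum_f_R0 (fun k => a m k * y ^ k) (S m).

Fixpoint asum (a : nat -> nat -> R) (x : R) (N : nat) : R :=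
  match N with
  | O => 0
  | S n => asum a x n + polyP a n (ln x) / x ^ (S n)
  end.

(* Main.v *)
Require Import Defs.
From Stdlib Require Import Reals.
From Coquelicot Require Import Coquelicot.
From Stdlib Require Import Lra Lia Psatz List Factorial ClassicalEpsilon.
Open Scope R_scope.


Lemma exp_ge_id a : a <= exp a.
Proof.
  destruct (Req_dec a 0) as [->|H].
  - rewrite exp_0; lra.
  - pose proof (exp_ineq1 a H); lra.
Qed.

Lemma exp_ge1 z : 0 <= z -> 1 <= exp z.
Proof.
  intros H. destruct (Req_dec z 0) as [->|H1].
  - rewrite exp_0; lra.
  - pose proof (exp_ineq1 z H1); lra.
Qed.

Lemma exp_nat m a : exp (INR m * a) = exp a ^ m.
Proof.
  induction m as [|m IH].
  - simpl. replace (0 * a) with 0 by ring. apply exp_0.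
  - rewrite S_INR. replace ((INR m + 1) * a) with (INR m * a + a) by ring.
    rewrite exp_plus, IH. simpl. ring.
Qed.

Lemma pow_exp_bound (n : nat) (z : R) : 0 <= z -> (z / INR (S n)) ^ (S n) <= exp z.
Proof.
  intros Hz.
  assert (HS : 0 < INR (S n)) by (apply lt_0_INR; lia).
  set (a := z / INR (S n)).
  assert (Ha : 0 <= a) by (unfold a; apply Rdiv_le_0_compat; lra).
  replace (exp z) with (exp (INR (S n) * a)) by (unfold a; f_equal; field; lra).
  rewrite exp_nat. apply pow_incr. split; [exact Ha| apply exp_ge_id].
Qed.

Lemma pow_le_Cexp n : exists C, 0 < C /\ forall z, 0 <= z -> z ^ n <= C * exp z.
Proof.
  assert (HS : 0 < INR (S n)) by (apply lt_0_INR; lia).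
  exists (INR (S n) ^ S n + 1). split.
  { pose proof (pow_lt _ (S n) HS). lra. }
  intros z Hz.
  pose proof (exp_ge1 z Hz) as He.
  pose proof (pow_lt _ (S n) HS) as Hp.
  destruct (Rle_lt_dec z 1) as [H1|H1].
  - assert (z ^ n <= 1).
    { replace 1 with (1 ^ n) by apply pow1. apply pow_incr. lra. }
    nra.
  - assert (z ^ n <= z ^ S n) by (apply Rle_pow; [lra|lia]).
    assert (E : z ^ S n = INR (S n) ^ S n * (z / INR (S n)) ^ S n).
    { rewrite <- Rpow_mult_distr. f_equal. field. lra. }
    pose proof (pow_exp_bound n z Hz).
    assert (0 <= (z / INR (S n)) ^ S n) by (apply pow_le; apply Rdiv_le_0_compat; lra).
    nra.
Qed.


Definition tt (x : R) := ln x / x.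
Definition ss (x : R) := / x.
Definition Ob (f g : R -> R) := exists C X, forall x, X <= x -> Rabs (f x) <= C * g x.

Lemma ln_lt_id x : 0 < x -> ln x < x.
Proof.
  intros Hx. destruct (Req_dec (ln x) 0) as [H|H].
  - rewrite H; lra.
  - pose proof (exp_ineq1 _ H). rewrite exp_ln in H0 by lra. lra.
Qed.

Lemma xe_facts x : exp 1 <= x ->
  0 < x /\ 1 <= ln x /\ 0 < ss x /\ ss x <= tt x /\ tt x <= 1.
Proof.
  intros Hx. pose proof (exp_ge1 1 ltac:(lra)).
  assert (Hx0 : 0 < x) by lra.
  assert (Hl : 1 <= ln x).
  { rewrite <- (ln_exp 1). apply ln_le; [apply exp_pos| exact Hx]. }
  pose proof (ln_lt_id x Hx0).
  unfold ss, tt. repeat split; try lra.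
  - apply Rinv_0_lt_compat; lra.
  - unfold Rdiv. pose proof (Rinv_0_lt_compat x Hx0). nra.
  - unfold Rdiv. apply (Rmult_le_reg_r x); [lra|].
    rewrite Rmult_assoc, Rinv_l by lra. lra.
Qed.

Lemma tt_pos x : exp 1 <= x -> 0 < tt x.
Proof. intros H; destruct (xe_facts x H) as (?&?&?&?&?); lra. Qed.

Lemma tt_small eps : 0 < eps -> exists X, forall x, X <= x -> tt x <= eps.
Proof.
  intros He. destruct (pow_le_Cexp 2) as [C [HC HC']].
  exists (Rmax (exp 1) (exp (C / eps))). intros x Hx.
  assert (H1 : exp 1 <= x) by (eapply Rle_trans; [apply Rmax_l|exact Hx]).
  assert (H2 : exp (C/eps) <= x) by (eapply Rle_trans; [apply Rmax_r|exact Hx]).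
  destruct (xe_facts x H1) as (Hx0&Hl&_&_&_).
  pose proof (HC' (ln x) ltac:(lra)) as H3. rewrite exp_ln in H3 by lra.
  assert (H4 : C / eps <= ln x).
  { rewrite <- (ln_exp (C/eps)). apply ln_le; [apply exp_pos|exact H2]. }
  unfold tt. apply (Rmult_le_reg_r x); [lra|].
  unfold Rdiv. rewrite Rmult_assoc, Rinv_l by lra. rewrite Rmult_1_r.
  apply (Rmult_le_reg_r (ln x)); [lra|].
  assert (C <= eps * ln x).
  { apply (Rmult_le_reg_r (/eps)). apply Rinv_0_lt_compat; lra.
    replace (eps * ln x * / eps) with (ln x) by (field; lra). exact H4. }
  simpl in H3. nra.
Qed.

Lemma Ob_plus f h g : Ob f g -> Ob h g -> Ob (fun x => f x + h x) g.
Proof.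
  intros [C1 [X1 H1]] [C2 [X2 H2]]. exists (C1 + C2), (Rmax X1 X2).
  intros x Hx. pose proof (H1 x (Rle_trans _ _ _ (Rmax_l _ _) Hx)).
  pose proof (H2 x (Rle_trans _ _ _ (Rmax_r _ _) Hx)).
  pose proof (Rabs_triang (f x) (h x)). lra.
Qed.

Lemma Ob_scal c f g : Ob f g -> Ob (fun x => c * f x) g.
Proof.
  intros [C [X H]]. exists (Rabs c * C), X. intros x Hx.
  rewrite Rabs_mult, Rmult_assoc. apply Rmult_le_compat_l; [apply Rabs_pos|auto].
Qed.

Lemma Ob_opp f g : Ob f g -> Ob (fun x => - f x) g.
Proof.
  intros [C [X H]]. exists C, X. intros x Hx. rewrite Rabs_Ropp. auto.
Qed.

Lemma Ob_minus f h g : Ob f g -> Ob h g -> Ob (fun x => f x - h x) g.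
Proof. intros A B. apply (Ob_plus f (fun x => - h x)); [auto| apply Ob_opp; auto]. Qed.

Lemma Ob_mulB f h g : Ob f g -> Ob h (fun _ => 1) -> Ob (fun x => f x * h x) g.
Proof.
  intros [C1 [X1 H1]] [C2 [X2 H2]]. exists (C1 * C2), (Rmax X1 X2).
  intros x Hx. pose proof (H1 x (Rle_trans _ _ _ (Rmax_l _ _) Hx)).
  pose proof (H2 x (Rle_trans _ _ _ (Rmax_r _ _) Hx)).
  rewrite Rabs_mult. pose proof (Rabs_pos (f x)). pose proof (Rabs_pos (h x)).
  replace (C1 * C2 * g x) with ((C1 * g x) * C2) by ring.
  apply Rmult_le_compat; lra.
Qed.

Lemma Ob_Bmul h f g : Ob h (fun _ => 1) -> Ob f g -> Ob (fun x => h x * f x) g.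
Proof.
  intros A B. destruct (Ob_mulB f h g B A) as [C [X H]]. exists C, X.
  intros x Hx. rewrite Rmult_comm. auto.
Qed.

Lemma Ob_le f g h : Ob f g -> (exists X K, forall x, X <= x -> 0 <= g x <= K * h x) -> Ob f h.
Proof.
  intros [C [X1 H1]] [X2 [K H2]]. exists (Rabs C * K), (Rmax X1 X2).
  intros x Hx. pose proof (H1 x (Rle_trans _ _ _ (Rmax_l _ _) Hx)).
  pose proof (H2 x (Rle_trans _ _ _ (Rmax_r _ _) Hx)).
  assert (C * g x <= Rabs C * g x) by (apply Rmult_le_compat_r; [lra| apply Rle_abs]).
  assert (Rabs C * g x <= Rabs C * (K * h x)) by (apply Rmult_le_compat_l; [apply Rabs_pos|lra]).
  lra.
Qed.

Lemma Ob_ext f f' g : (exists X, forall x, X <= x -> f x = f' x) -> Ob f g -> Ob f' g.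
Proof.
  intros [X1 H1] [C [X H]]. exists C, (Rmax X X1). intros x Hx.
  rewrite <- H1 by (eapply Rle_trans; [apply Rmax_r|exact Hx]).
  apply H. eapply Rle_trans; [apply Rmax_l|exact Hx].
Qed.

Lemma Ob_refl g : (exists X, forall x, X <= x -> 0 <= g x) -> Ob g g.
Proof.
  intros [X H]. exists 1, X. intros x Hx. rewrite Rabs_pos_eq by auto. lra.
Qed.

Lemma tt_pow_le N M : (M <= N)%nat ->
  exists X K, forall x, X <= x -> 0 <= tt x ^ N <= K * tt x ^ M.
Proof.
  intros HNM. exists (exp 1), 1. intros x Hx.
  destruct (xe_facts x Hx) as (?&?&?&?&?).
  split. apply pow_le; lra.
  rewrite Rmult_1_l. replace N with (M + (N - M))%nat by lia.
  rewrite pow_add. assert (0 <= tt x ^ M) by (apply pow_le; lra).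
  assert (tt x ^ (N - M) <= 1).
  { replace 1 with (1 ^ (N - M)) by apply pow1. apply pow_incr; lra. }
  assert (0 <= tt x ^ (N-M)) by (apply pow_le; lra). nra.
Qed.

Lemma Ob_tt_mono f N M : (M <= N)%nat -> Ob f (fun x => tt x ^ N) -> Ob f (fun x => tt x ^ M).
Proof. intros H A. eapply Ob_le; [exact A| apply tt_pow_le; auto]. Qed.

Lemma Ob_tt_bd f N : Ob f (fun x => tt x ^ N) -> Ob f (fun _ => 1).
Proof.
  intros A. eapply Ob_le; [exact A|]. exists (exp 1), 1. intros x Hx.
  destruct (xe_facts x Hx) as (?&?&?&?&?). split. apply pow_le; lra.
  replace (1*1) with (1 ^ N) by (rewrite pow1; ring). apply pow_incr; lra.
Qed.

Lemma Ob_small f eps : Ob f tt -> 0 < eps -> exists X, forall x, X <= x -> Rabs (f x) <= eps.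
Proof.
  intros [C [X H]] He. destruct (tt_small (eps / (Rabs C + 1))) as [X1 H1].
  { apply Rdiv_lt_0_compat; [lra| pose proof (Rabs_pos C); lra]. }
  exists (Rmax (Rmax X X1) (exp 1)). intros x Hx.
  assert (A1 : X <= x) by (repeat (eapply Rle_trans; [|exact Hx]); eapply Rle_trans; [apply Rmax_l|]; apply Rmax_l).
  assert (A2 : X1 <= x) by (eapply Rle_trans; [|exact Hx]; eapply Rle_trans; [apply Rmax_r|]; apply Rmax_l).
  assert (A3 : exp 1 <= x) by (eapply Rle_trans; [apply Rmax_r|exact Hx]).
  pose proof (H x A1). pose proof (H1 x A2). pose proof (tt_pos x A3).
  assert (C * tt x <= Rabs C * tt x) by (apply Rmult_le_compat_r; [lra|apply Rle_abs]).
  assert (Rabs C * tt x <= Rabs C * (eps / (Rabs C + 1))) by (apply Rmult_le_compat_l; [apply Rabs_pos|lra]).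
  assert (Rabs C * (eps / (Rabs C + 1)) <= eps).
  { pose proof (Rabs_pos C). apply (Rmult_le_reg_r (Rabs C + 1)); [lra|].
    field_simplify; [|lra]. nra. }
  lra.
Qed.


Definition mono := (R * nat * nat)%type.
Definition mval (m : mono) (x : R) : R :=
  let '(c, a, b) := m in c * tt x ^ a * ss x ^ b.
Fixpoint val (l : list mono) (x : R) : R :=
  match l with nil => 0 | m :: l' => mval m x + val l' x end.
Definition mmul (m1 m2 : mono) : mono :=
  let '(c1, a1, b1) := m1 in let '(c2, a2, b2) := m2 in (c1 * c2, (a1 + a2)%nat, (b1 + b2)%nat).
Definition lmul (l1 l2 : list mono) : list mono :=
  flat_map (fun m1 => map (mmul m1) l2) l1.

Lemma val_app l1 l2 x : val (l1 ++ l2) x = val l1 x + val l2 x.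
Proof. induction l1; simpl; [ring| rewrite IHl1; ring]. Qed.

Lemma mval_mmul m1 m2 x : mval (mmul m1 m2) x = mval m1 x * mval m2 x.
Proof. destruct m1 as [[c1 a1] b1], m2 as [[c2 a2] b2]. simpl. rewrite !pow_add. ring. Qed.

Lemma val_map_mmul m l x : val (map (mmul m) l) x = mval m x * val l x.
Proof. induction l; simpl; [ring| rewrite IHl, mval_mmul; ring]. Qed.

Lemma val_lmul l1 l2 x : val (lmul l1 l2) x = val l1 x * val l2 x.
Proof.
  induction l1; simpl; [ring|]. unfold lmul in *. simpl.
  rewrite val_app, val_map_mmul, IHl1. ring.
Qed.

Lemma val_bd l : Ob (val l) (fun _ => 1).
Proof.
  induction l as [|[[c a] b] l IH].
  - exists 0, 0. intros. simpl. rewrite Rabs_R0. lra.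
  - apply (Ob_plus (mval (c,a,b)) (val l)); [|exact IH].
    exists (Rabs c), (exp 1). intros x Hx. simpl.
    destruct (xe_facts x Hx) as (?&?&?&?&?).
    rewrite !Rabs_mult. rewrite <- !RPow_abs.
    rewrite (Rabs_pos_eq (tt x)) by lra. rewrite (Rabs_pos_eq (ss x)) by lra.
    assert (tt x ^ a <= 1) by (rewrite <- (pow1 a); apply pow_incr; lra).
    assert (ss x ^ b <= 1) by (rewrite <- (pow1 b); apply pow_incr; lra).
    assert (0 <= tt x ^ a) by (apply pow_le; lra).
    assert (0 <= ss x ^ b) by (apply pow_le; lra).
    pose proof (Rabs_pos c). 
    assert (tt x ^ a * ss x ^ b <= 1) by nra. nra.
Qed.

Definition E (N : nat) (f : R -> R) :=
  exists l, Ob (fun x => f x - val l x) (fun x => tt x ^ S N).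

Lemma E_close N f g : E N f -> Ob (fun x => g x - f x) (fun x => tt x ^ S N) -> E N g.
Proof.
  intros [l H] H2. exists l.
  eapply Ob_ext; [| apply (Ob_plus _ _ _ H2 H)]. exists 0. intros. ring.
Qed.

Lemma Ob_zero g : Ob (fun _ => 0) g.
Proof. exists 0, 0. intros. rewrite Rabs_R0. lra. Qed.

Lemma E_val N l : E N (val l).
Proof. exists l. eapply Ob_ext; [|apply Ob_zero]. exists 0. intros; ring. Qed.

Lemma E_ext N f g : (exists X, forall x, X <= x -> f x = g x) -> E N f -> E N g.
Proof.
  intros [X H] A. apply (E_close N f g A). eapply Ob_ext; [|apply Ob_zero].
  exists X. intros x Hx. rewrite H; auto; ring.
Qed.

Lemma E_const N c : E N (fun _ => c).
Proof.
  apply (E_ext N (val ((c,0%nat,0%nat)::nil))); [|apply E_val].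
  exists 0. intros. simpl. ring.
Qed.

Lemma E_tt N : E N tt.
Proof.
  apply (E_ext N (val ((1,1%nat,0%nat)::nil))); [|apply E_val].
  exists 0. intros. simpl. ring.
Qed.

Lemma E_ss N : E N ss.
Proof.
  apply (E_ext N (val ((1,0%nat,1%nat)::nil))); [|apply E_val].
  exists 0. intros. simpl. ring.
Qed.

Lemma E_plus N f g : E N f -> E N g -> E N (fun x => f x + g x).
Proof.
  intros [l1 H1] [l2 H2]. exists (l1 ++ l2).
  eapply Ob_ext; [|apply (Ob_plus _ _ _ H1 H2)]. exists 0. intros. rewrite val_app. ring.
Qed.

Lemma E_bd N f : E N f -> Ob f (fun _ => 1).
Proof.
  intros [l H]. eapply Ob_ext; [|apply (Ob_plus _ _ _ (Ob_tt_bd _ _ H) (val_bd l))].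
  exists 0. intros; ring.
Qed.

Lemma E_mul N f g : E N f -> E N g -> E N (fun x => f x * g x).
Proof.
  intros Hf Hg. pose proof (E_bd N g Hg) as Bg.
  destruct Hf as [l1 H1], Hg as [l2 H2]. exists (lmul l1 l2).
  eapply Ob_ext; [|apply (Ob_plus _ _ _ (Ob_mulB _ _ _ H1 Bg) (Ob_Bmul _ _ _ (val_bd l1) H2))].
  exists 0. intros. rewrite val_lmul. ring.
Qed.

Lemma E_scal N c f : E N f -> E N (fun x => c * f x).
Proof. intros. apply (E_mul N (fun _ => c) f); auto using E_const. Qed.

Lemma E_opp N f : E N f -> E N (fun x => - f x).
Proof.
  intros H. apply (E_ext N (fun x => (-1) * f x)); [exists 0; intros; ring| apply E_scal; auto].
Qed.

Lemma E_minus N f g : E N f -> E N g -> E N (fun x => f x - g x).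
Proof. intros. apply (E_plus N f (fun x => - g x)); auto using E_opp. Qed.

Lemma E_pow N f n : E N f -> E N (fun x => f x ^ n).
Proof.
  intros H. induction n.
  - simpl. apply E_const.
  - simpl. apply (E_mul N f (fun x => f x ^ n)); auto.
Qed.

Lemma E_mono N f : E (S N) f -> E N f.
Proof. intros [l H]. exists l. eapply Ob_tt_mono; [|exact H]. lia. Qed.

Lemma Ob_mul f g h k : Ob f g -> Ob h k -> Ob (fun x => f x * h x) (fun x => g x * k x).
Proof.
  intros [C1 [X1 H1]] [C2 [X2 H2]]. exists (C1 * C2), (Rmax X1 X2).
  intros x Hx. pose proof (H1 x (Rle_trans _ _ _ (Rmax_l _ _) Hx)).
  pose proof (H2 x (Rle_trans _ _ _ (Rmax_r _ _) Hx)).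
  rewrite Rabs_mult. replace (C1 * C2 * (g x * k x)) with ((C1 * g x) * (C2 * k x)) by ring.
  apply Rmult_le_compat; auto using Rabs_pos.
Qed.

Lemma Ob_pow f g n : Ob f g -> Ob (fun x => f x ^ n) (fun x => g x ^ n).
Proof.
  intros H. induction n.
  - simpl. exists 1, 0. intros. rewrite Rabs_R1. lra.
  - simpl. apply (Ob_mul f g); auto.
Qed.

Lemma E_ss_mul N f : E N f -> E (S N) (fun x => ss x * f x).
Proof.
  intros [l H]. exists (lmul ((1,0%nat,1%nat)::nil) l).
  assert (Hs : Ob ss ss) by (apply Ob_refl; exists (exp 1); intros x Hx; destruct (xe_facts x Hx) as (?&?&?&?&?); lra).
  pose proof (Ob_mul _ _ _ _ Hs H) as H3.
  eapply Ob_ext; [|eapply Ob_le; [exact H3|]].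
  - exists 0. intros. rewrite val_lmul. simpl. ring.
  - exists (exp 1), 1. intros x Hx. destruct (xe_facts x Hx) as (?&?&?&?&?).
    assert (0 <= tt x ^ S N) by (apply pow_le; lra).
    change (tt x ^ S (S N)) with (tt x * tt x ^ S N). split; nra.
Qed.


Fixpoint G (M : nat) (r : R) : R :=
  match M with O => 0 | S M' => G M' r + (-r) ^ M' end.

Fixpoint LT (M : nat) (r : R) : R :=
  match M with O => 0 | S M' => LT M' r + (-1) ^ M' * r ^ (S M') / INR (S M') end.

Lemma G_id M r : (1 + r) * G M r = 1 - (-r) ^ M.
Proof. induction M; simpl; [ring|]. rewrite Rmult_plus_distr_l, IHM. ring. Qed.

Lemma LT_0 M : LT M 0 = 0.
Proof. induction M; simpl; [ring|]. rewrite IHM. unfold Rdiv. ring. Qed.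

Lemma LT_derive M r : is_derive (LT M) r (G M r).
Proof.
  induction M as [|M IH].
  - simpl. apply (is_derive_const 0).
  - assert (H2 : is_derive (fun r => (-1)^M * r^(S M) / INR (S M)) r ((-r)^M)).
    { auto_derive; [auto|].
      change (match M with | 0%nat => 1 | S _ => INR M + 1 end) with (INR (S M)).
      replace (-r) with (-1 * r) by ring. rewrite Rpow_mult_distr.
      field. apply not_0_INR. lia. }
    exact (is_derive_plus _ _ _ _ _ IH H2).
Qed.

Lemma ln_taylor M v : Rabs v <= 1/2 -> Rabs (ln (1 + v) - LT M v) <= 2 * Rabs v ^ (S M).
Proof.
  intros Hv.
  set (phi := fun r => ln (1 + r) - LT M r).
  set (dphi := fun r => / (1 + r) - G M r).
  assert (Hd : forall x, Rabs x <= 1/2 -> is_derive phi x (dphi x)).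
  { intros x Hx. unfold phi, dphi.
    assert (0 < 1 + x) by (apply Rabs_le_between in Hx; lra).
    apply (is_derive_minus (fun r => ln (1 + r)) (LT M)); [|apply LT_derive].
    auto_derive; [lra| field; lra]. }
  assert (Hint : forall x, Rmin 0 v <= x <= Rmax 0 v -> Rabs x <= Rabs v).
  { intros x [H1 H2]. unfold Rmin, Rmax in *.
    destruct (Rle_dec 0 v); apply Rabs_le; rewrite ?Rabs_pos_eq by lra;
    try (rewrite Rabs_left by lra); lra. }
  destruct (MVT_gen phi 0 v dphi) as [c [Hc Hmvt]].
  - intros x Hx. apply Hd. eapply Rle_trans; [apply Hint; lra| lra].
  - intros x Hx. apply continuity_pt_filterlim. apply (ex_derive_continuous (K:=R_AbsRing) (V:=R_NormedModule) phi x).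
    eexists. apply Hd. eapply Rle_trans; [apply Hint; lra| lra].
  - assert (Hphi0 : phi 0 = 0) by (unfold phi; rewrite LT_0, Rplus_0_r, ln_1; ring).
    change (ln (1 + v) - LT M v) with (phi v).
    replace (phi v) with (dphi c * v) by (rewrite Rminus_0_r in Hmvt; rewrite <- Hmvt, Hphi0; ring).
    pose proof (Hint c Hc) as Hcv.
    assert (Hc1 : 1/2 <= 1 + c) by (assert (Rabs c <= 1/2) by lra; apply Rabs_le_between in H; lra).
    assert (Edp : dphi c = (-c)^M / (1 + c)).
    { unfold dphi. apply (Rmult_eq_reg_l (1 + c)); [|lra].
      rewrite Rmult_minus_distr_l, G_id. field. lra. }
    rewrite Edp, Rabs_mult. unfold Rdiv. rewrite Rabs_mult, <- RPow_abs, Rabs_Ropp.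
    rewrite (Rabs_pos_eq (/ (1 + c))) by (left; apply Rinv_0_lt_compat; lra).
    assert (/ (1 + c) <= 2).
    { apply (Rmult_le_reg_r (1 + c)); [lra|]. rewrite Rinv_l by lra. lra. }
    assert (Rabs c ^ M <= Rabs v ^ M) by (apply pow_incr; split; [apply Rabs_pos|lra]).
    assert (0 <= Rabs c ^ M) by (apply pow_le; apply Rabs_pos).
    assert (0 < / (1 + c)) by (apply Rinv_0_lt_compat; lra).
    pose proof (Rabs_pos v).
    assert (Rabs c ^ M * / (1 + c) <= Rabs v ^ M * 2) by (apply Rmult_le_compat; lra).
    simpl. nra.
Qed.

Lemma E_G N M v : E N v -> E N (fun x => G M (v x)).
Proof.
  intros H. induction M; cbn [LT G].
  - apply E_const.
  - apply (E_plus N (fun x => G M (v x)) (fun x => (- v x) ^ M)); auto.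
    apply (E_pow N (fun x => - v x)). apply E_opp; auto.
Qed.

Lemma E_LT N M v : E N v -> E N (fun x => LT M (v x)).
Proof.
  intros H. induction M; cbn [LT G].
  - apply E_const.
  - apply (E_plus N (fun x => LT M (v x))); auto.
    apply (E_ext N (fun x => ((-1)^M / INR (S M)) * (v x ^ (S M)))).
    + exists 0; intros; unfold Rdiv; ring.
    + apply E_scal. apply E_pow; auto.
Qed.

Lemma Ob_pow_tt v N : Ob v tt -> exists C X, forall x, X <= x ->
   Rabs (v x) <= 1/2 /\ Rabs (v x) ^ N <= C * tt x ^ N.
Proof.
  intros H. destruct (Ob_pow _ _ N H) as [C [X1 H1]].
  destruct (Ob_small v (1/2) H ltac:(lra)) as [X2 H2].
  exists C, (Rmax X1 X2). intros x Hx. split.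
  - apply H2. eapply Rle_trans; [apply Rmax_r|exact Hx].
  - rewrite RPow_abs. apply H1. eapply Rle_trans; [apply Rmax_l|exact Hx].
Qed.

Lemma E_ln N v : E N v -> Ob v tt -> E N (fun x => ln (1 + v x)).
Proof.
  intros H Hv. apply (E_close N (fun x => LT N (v x))); [apply E_LT; auto|].
  destruct (Ob_pow_tt v (S N) Hv) as [C [X H1]].
  exists (2 * C), X. intros x Hx. destruct (H1 x Hx) as [A B].
  pose proof (ln_taylor N (v x) A). lra.
Qed.

Lemma E_inv N v : E N v -> Ob v tt -> E N (fun x => / (1 + v x)).
Proof.
  intros H Hv. apply (E_close N (fun x => G (S N) (v x))); [apply E_G; auto|].
  destruct (Ob_pow_tt v (S N) Hv) as [C [X H1]].
  exists (2 * C), X. intros x Hx. destruct (H1 x Hx) as [A B].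
  assert (Hc1 : 1/2 <= 1 + v x) by (apply Rabs_le_between in A; lra).
  assert (E1 : / (1 + v x) - G (S N) (v x) = (- v x) ^ (S N) / (1 + v x)).
  { apply (Rmult_eq_reg_l (1 + v x)); [|lra].
    rewrite Rmult_minus_distr_l, G_id. field. lra. }
  rewrite E1. unfold Rdiv. rewrite Rabs_mult, <- RPow_abs, Rabs_Ropp.
  rewrite (Rabs_pos_eq (/ (1 + v x))) by (left; apply Rinv_0_lt_compat; lra).
  assert (/ (1 + v x) <= 2).
  { apply (Rmult_le_reg_r (1 + v x)); [lra|]. rewrite Rinv_l by lra. lra. }
  assert (0 <= Rabs (v x) ^ S N) by (apply pow_le; apply Rabs_pos).
  assert (0 < / (1 + v x)) by (apply Rinv_0_lt_compat; lra).
  nra.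
Qed.


Definition lm (m : nat) (t : R) : R := / (ln t ^ m).

Lemma ln_pos1 z : 1 < z -> 0 < ln z.
Proof. intros H. rewrite <- ln_1. apply ln_increasing; lra. Qed.

Lemma lm_derive m z : 1 < z -> is_derive (lm m) z (- INR m * / z * lm (S m) z).
Proof.
  intros H. pose proof (ln_pos1 z H). unfold lm.
  auto_derive.
  - split; [lra| split; [apply pow_nonzero; lra| exact I]].
  - destruct m; simpl; field; repeat split; try lra; try (apply pow_nonzero; lra).
Qed.

Lemma F_derive m z : 1 < z -> is_derive (fun t => t * lm m t) z (lm m z - INR m * lm (S m) z).
Proof.
  intros H. pose proof (ln_pos1 z H). unfold lm.
  auto_derive.
  - split; [lra| split; [apply pow_nonzero; lra| exact I]].
  - destruct m; simpl; field; repeat split; try lra; try (apply pow_nonzero; lra).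
Qed.

Lemma lm_cont m z : 1 < z -> continuous (lm m) z.
Proof.
  intros H. apply (ex_derive_continuous (K:=R_AbsRing) (V:=R_NormedModule)).
  eexists. apply lm_derive; auto.
Qed.

Lemma lm_ex m a b : 1 < a -> 1 < b -> ex_RInt (lm m) a b.
Proof.
  intros Ha Hb. apply (ex_RInt_continuous (V:=R_CompleteNormedModule)). intros z Hz. apply lm_cont.
  unfold Rmin, Rmax in Hz. destruct (Rle_dec a b); lra.
Qed.

Lemma lm_pos m z : 1 < z -> 0 < lm m z.
Proof. intros H. unfold lm. apply Rinv_0_lt_compat, pow_lt, ln_pos1; auto. Qed.

Lemma lm_decr m a b : 1 < a -> a <= b -> lm m b <= lm m a.
Proof.
  intros Ha Hab. unfold lm. pose proof (ln_pos1 a Ha).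
  apply Rinv_le_contravar. apply pow_lt; auto.
  apply pow_incr. split; [lra|]. apply ln_le; lra.
Qed.

Lemma RInt_lm_bounds m a b : 1 < a -> a <= b ->
  (b - a) * lm m b <= RInt (lm m) a b <= (b - a) * lm m a.
Proof.
  intros Ha Hab. split.
  - replace ((b - a) * lm m b) with (RInt (fun _ => lm m b) a b)
      by (rewrite RInt_const; reflexivity).
    apply RInt_le; auto. apply ex_RInt_const. apply lm_ex; lra.
    intros x Hx. apply lm_decr; lra.
  - replace ((b - a) * lm m a) with (RInt (fun _ => lm m a) a b)
      by (rewrite RInt_const; reflexivity).
    apply RInt_le; auto. apply lm_ex; lra. apply ex_RInt_const.
    intros x Hx. apply lm_decr; lra.
Qed.

Lemma dF_cont m z : 1 < z -> continuous (fun t => lm m t - INR m * lm (S m) t) z.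
Proof.
  intros H. apply (ex_derive_continuous (K:=R_AbsRing) (V:=R_NormedModule)).
  eexists. apply (is_derive_minus (lm m) (fun t => INR m * lm (S m) t)).
  apply lm_derive; auto. apply is_derive_scal. apply lm_derive; auto.
Qed.

Lemma lm_ibp m a b : 1 < a -> 1 < b ->
  RInt (lm m) a b = b * lm m b - a * lm m a + INR m * RInt (lm (S m)) a b.
Proof.
  intros Ha Hb.
  assert (Hin : forall x, Rmin a b <= x <= Rmax a b -> 1 < x).
  { intros x Hx. unfold Rmin, Rmax in Hx. destruct (Rle_dec a b); lra. }
  assert (HI : is_RInt (fun t => lm m t - INR m * lm (S m) t) a b (b * lm m b - a * lm m a)).
  { apply (is_RInt_derive (fun t => t * lm m t)).
    - intros x Hx. apply F_derive. auto.
    - intros x Hx. apply dF_cont. auto. }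
  apply (is_RInt_unique (V:=R_CompleteNormedModule)) in HI.
  assert (E1 : RInt (fun t => lm m t - INR m * lm (S m) t) a b
             = RInt (lm m) a b - INR m * RInt (lm (S m)) a b).
  { rewrite (RInt_minus (V:=R_CompleteNormedModule) (lm m) (fun t => INR m * lm (S m) t)).
    2: apply lm_ex; auto.
    2: { apply (ex_RInt_scal (V:=R_NormedModule) (lm (S m)) a b (INR m)). apply lm_ex; auto. }
    assert (E2 : RInt (fun t => INR m * lm (S m) t) a b = INR m * RInt (lm (S m)) a b)
      by (exact (RInt_scal (V:=R_CompleteNormedModule) (lm (S m)) a b (INR m) (lm_ex _ _ _ Ha Hb))).
    rewrite E2. reflexivity. }
  rewrite E1 in HI. lra.
Qed.


Lemma exp_le x y : x <= y -> exp x <= exp y.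
Proof. intros [H|H]; [left; apply exp_increasing; auto| subst; lra]. Qed.

Lemma RInt_invln a b : RInt (fun t => / ln t) a b = RInt (lm 1) a b.
Proof. apply RInt_ext. intros. unfold lm. rewrite pow_1. reflexivity. Qed.

Lemma li_diff y1 y2 l1 l2 : 1 < y1 -> 1 < y2 -> is_li y1 l1 -> is_li y2 l2 ->
  l2 = l1 + RInt (lm 1) y1 y2.
Proof.
  intros H1 H2 L1 L2. unfold is_li in *.
  set (c := RInt (lm 1) y1 y2).
  set (e1 := fun eps : R => RInt (fun t => / ln t) 0 (1 - eps) + RInt (fun t => / ln t) (1 + eps) y1) in *.
  set (e2 := fun eps : R => RInt (fun t => / ln t) 0 (1 - eps) + RInt (fun t => / ln t) (1 + eps) y2) in *.
  assert (L3 : filterlim (fun eps => plus (e1 eps) c) (at_right 0) (locally (plus l1 c))).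
  { apply (filterlim_comp_2 e1 (fun _ => c) plus L1 (filterlim_const c)).
    apply (filterlim_plus (K:=R_AbsRing) (V:=R_NormedModule)). }
  assert (L4 : filterlim e2 (at_right 0) (locally (plus l1 c))).
  { apply (filterlim_ext_loc (fun eps => plus (e1 eps) c)); [|exact L3].
    assert (Hd : 0 < Rmin y1 y2 - 1) by (apply Rmin_case; lra).
    exists (mkposreal _ Hd). intros eps Hb Hpos. simpl in Hb.
    unfold ball in Hb; simpl in Hb; unfold AbsRing_ball, abs, minus, plus, opp in Hb; simpl in Hb.
    rewrite Ropp_0, Rplus_0_r in Hb. apply Rabs_lt_between in Hb.
    assert (Hm1 : eps < y1 - 1) by (pose proof (Rmin_l y1 y2); lra).
    assert (Hm2 : eps < y2 - 1) by (pose proof (Rmin_r y1 y2); lra).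
    unfold e1, e2, c. rewrite !RInt_invln.
    rewrite <- (RInt_Chasles (V:=R_CompleteNormedModule) (lm 1) (1 + eps) y1 y2).
    - apply Rplus_assoc.
    - apply lm_ex; lra.
    - apply lm_ex; lra. }
  pose proof (@filterlim_locally_unique R R_AbsRing R_NormedModule (at_right 0) (Proper_StrongProper _ (at_right_proper_filter 0)) e2 _ _ L2 L4).
  rewrite H. reflexivity.
Qed.

Lemma pow_le_exp_half m : exists Z, 0 < Z /\ forall z, Z <= z -> z ^ m <= exp (z / 2).
Proof.
  destruct (pow_le_Cexp (S m)) as [C [HC H]].
  exists (Rmax 1 (2 ^ S m * C)). split. { pose proof (Rmax_l 1 (2 ^ S m * C)); lra. }
  intros z Hz. pose proof (Rmax_l 1 (2 ^ S m * C)). pose proof (Rmax_r 1 (2 ^ S m * C)).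
  pose proof (H (z / 2) ltac:(lra)) as H3.
  assert (E1 : z * z ^ m = 2 ^ S m * (z / 2) ^ S m).
  { rewrite <- Rpow_mult_distr. replace (2 * (z / 2)) with z by field. reflexivity. }
  assert (H4 : z * z ^ m <= 2 ^ S m * C * exp (z / 2)).
  { rewrite E1, Rmult_assoc. apply Rmult_le_compat_l; [apply pow_le; lra| exact H3]. }
  pose proof (exp_pos (z/2)).
  assert (H5 : 2 ^ S m * C * exp (z / 2) <= z * exp (z / 2)) by (apply Rmult_le_compat_r; lra).
  assert (0 <= z ^ m) by (apply pow_le; lra).
  nra.
Qed.

Lemma J_bound m y0 : 1 < y0 -> exists C Y, 1 < Y /\ forall y, Y <= y ->
  0 <= RInt (lm m) y0 y <= C * (y * lm m y).
Proof.
  intros Hy0. destruct (pow_le_exp_half m) as [Z [HZ HZ']].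
  exists (lm m y0 + 2 ^ m), (Rmax (Rmax (y0 * y0) (exp Z)) (exp (2 * ln y0))).
  split. { eapply Rlt_le_trans; [|apply Rmax_l]. eapply Rlt_le_trans; [|apply Rmax_l]. nra. }
  intros y Hy.
  assert (A1 : y0 * y0 <= y) by (eapply Rle_trans; [|exact Hy]; eapply Rle_trans; [|apply Rmax_l]; apply Rmax_l).
  assert (A2 : exp Z <= y) by (eapply Rle_trans; [|exact Hy]; eapply Rle_trans; [|apply Rmax_l]; apply Rmax_r).
  assert (A3 : exp (2 * ln y0) <= y) by (eapply Rle_trans; [|exact Hy]; apply Rmax_r).
  assert (Hy1 : y0 <= y) by nra.
  assert (Hy1' : 1 < y) by lra.
  set (z := ln y).
  assert (Hz : Z <= z).
  { unfold z. rewrite <- (ln_exp Z). apply ln_le; [apply exp_pos|auto]. }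
  assert (Hz2 : 2 * ln y0 <= z).
  { unfold z. rewrite <- (ln_exp (2 * ln y0)). apply ln_le; [apply exp_pos|auto]. }
  set (p := exp (z / 2)).
  assert (Hpp : p * p = y) by (unfold p; rewrite <- exp_plus; replace (z/2 + z/2) with z by field; unfold z; apply exp_ln; lra).
  assert (Hp0 : y0 <= p).
  { unfold p. rewrite <- (exp_ln y0) by lra. apply exp_le. lra. }
  assert (Hlp : ln p = z / 2) by (unfold p; apply ln_exp).
  assert (Hzpos : 0 < z) by (pose proof (ln_pos1 y0 Hy0); lra).
  assert (Hzm : 0 < z ^ m) by (apply pow_lt; lra).
  assert (Hpy : p <= y) by nra.
  assert (Hgrow : z ^ m <= p) by (apply HZ'; auto).
  assert (Elmy : lm m y = / z ^ m) by reflexivity.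
  assert (Elmp : lm m p = 2 ^ m * / z ^ m).
  { unfold lm. rewrite Hlp. unfold Rdiv. rewrite Rpow_mult_distr, pow_inv.
    field. split; [apply pow_nonzero; lra| apply pow_nonzero; lra]. }
  rewrite <- (RInt_Chasles (V:=R_CompleteNormedModule) (lm m) y0 p y) by (apply lm_ex; lra).
  change plus with Rplus.
  destruct (RInt_lm_bounds m y0 p Hy0 Hp0) as [B1 B2].
  destruct (RInt_lm_bounds m p y ltac:(lra) Hpy) as [B3 B4].
  pose proof (lm_pos m y0 Hy0). pose proof (lm_pos m y ltac:(lra)). pose proof (lm_pos m p ltac:(lra)).
  split. { nra. }
  assert (G1 : p <= y * lm m y).
  { rewrite Elmy, <- Hpp. apply (Rmult_le_reg_r (z ^ m)); auto.
    field_simplify; [|lra]. nra. }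
  assert (G2 : (p - y0) * lm m y0 <= lm m y0 * (y * lm m y)) by nra.
  assert (G3 : (y - p) * lm m p <= 2 ^ m * (y * lm m y)).
  { rewrite Elmp, Elmy. assert (0 < / z ^ m) by (apply Rinv_0_lt_compat; auto).
    assert (0 < 2 ^ m) by (apply pow_lt; lra). nra. }
  nra.
Qed.


Fixpoint Ssum (K : nat) (y : R) : R :=
  match K with O => 0 | S K' => Ssum K' y + INR (fact K') * (y * lm (S K') y) end.

Fixpoint Hs (K : nat) (w : R) : R :=
  match K with O => 0 | S K' => Hs K' w + INR (fact K') * w ^ K' end.

Lemma li_exp K y0 y : 1 < y0 -> 1 < y ->
  Ssum K y - Ssum K y0 + INR (fact K) * RInt (lm (S K)) y0 y = RInt (lm 1) y0 y.
Proof.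
  intros H0 H. induction K.
  - simpl. ring.
  - rewrite <- IHK, (lm_ibp (S K) y0 y H0 H). cbn [Ssum].
    replace (fact (S K)) with (S K * fact K)%nat by reflexivity.
    rewrite mult_INR. ring.
Qed.

Lemma li_bound K y0 : 1 < y0 -> exists A B Y, 1 < Y /\ forall y, Y <= y ->
  Rabs (RInt (lm 1) y0 y - Ssum K y) <= A + B * (y * lm (S K) y).
Proof.
  intros H0. destruct (J_bound (S K) y0 H0) as [C [Y [HY H]]].
  exists (Rabs (Ssum K y0)), (INR (fact K) * C), Y. split; auto.
  intros y Hy. rewrite <- (li_exp K y0 y H0) by lra.
  destruct (H y Hy) as [J1 J2].
  pose proof (pos_INR (fact K)).
  replace (Ssum K y - Ssum K y0 + INR (fact K) * RInt (lm (S K)) y0 y - Ssum K y)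
    with (- Ssum K y0 + INR (fact K) * RInt (lm (S K)) y0 y) by ring.
  eapply Rle_trans; [apply Rabs_triang|]. rewrite Rabs_Ropp.
  rewrite (Rabs_pos_eq (INR (fact K) * _)) by nra.
  assert (INR (fact K) * RInt (lm (S K)) y0 y <= INR (fact K) * (C * (y * lm (S K) y)))
    by (apply Rmult_le_compat_l; auto). lra.
Qed.

Lemma lm_S k y : 1 < y -> lm (S k) y = (lm 1 y) ^ (S k).
Proof. intros H. unfold lm. rewrite pow_1, pow_inv. reflexivity. Qed.

Lemma Ssum_eq K y : 1 < y -> Ssum K y = y * lm 1 y * Hs K (lm 1 y).
Proof.
  intros H. induction K; cbn [Ssum Hs]; [ring|]. rewrite IHK, (lm_S K y H). replace (lm 1 y ^ S K) with (lm 1 y * lm 1 y ^ K) by reflexivity. ring.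
Qed.

Definition gg (ali : R -> R) (x : R) := ali (exp x).
Definition uu (ali : R -> R) (x : R) := ali (exp x) / (x * exp x).
Definition DD (ali : R -> R) (x : R) := 1 + tt x + ss x * ln (uu ali x).

Lemma g_int ali (Hali : is_ali ali) x :
  RInt (lm 1) (ali (exp 0)) (ali (exp x)) = exp x - exp 0.
Proof.
  destruct (Hali (exp 0)) as [A1 A2]. destruct (Hali (exp x)) as [B1 B2].
  pose proof (li_diff _ _ _ _ A1 B1 A2 B2). lra.
Qed.

Lemma g_lower ali (Hali : is_ali ali) x : 0 < x ->
  ali (exp 0) < ali (exp x) /\ ln (ali (exp 0)) * exp x <= ali (exp x).
Proof.
  intros Hx. set (y0 := ali (exp 0)). set (y := ali (exp x)).
  pose proof (g_int ali Hali x) as HI. fold y0 y in HI.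
  destruct (Hali (exp 0)) as [A1 _]. destruct (Hali (exp x)) as [B1 _]. fold y0 y in A1, B1.
  rewrite exp_0 in HI. pose proof (exp_ineq1 x ltac:(lra)).
  assert (Hlt : y0 < y).
  { destruct (Rlt_le_dec y0 y) as [Hc|Hc]; auto.
    destruct (RInt_lm_bounds 1 y y0 B1 Hc) as [C1 C2].
    rewrite <- (opp_RInt_swap (V:=R_CompleteNormedModule)) in HI by (apply lm_ex; auto).
    pose proof (lm_pos 1 y0 A1). change opp with Ropp in HI. nra. }
  split; auto.
  destruct (RInt_lm_bounds 1 y0 y A1 (Rlt_le _ _ Hlt)) as [C1 C2].
  assert (Hl : lm 1 y0 = / ln y0) by (unfold lm; rewrite pow_1; reflexivity).
  pose proof (ln_pos1 y0 A1). pose proof (ln_lt_id y0 ltac:(lra)).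
  rewrite Hl in C2.
  assert (exp x - 1 <= (y - y0) / ln y0) by (unfold Rdiv; lra).
  assert (ln y0 * (exp x - 1) <= y - y0).
  { apply (Rmult_le_reg_r (/ ln y0)). apply Rinv_0_lt_compat; auto.
    replace (ln y0 * (exp x - 1) * / ln y0) with (exp x - 1) by (field; lra).
    unfold Rdiv in H1. lra. }
  nra.
Qed.

Lemma uu_pos ali (Hali : is_ali ali) x : 0 < x -> 0 < uu ali x.
Proof.
  intros Hx. unfold uu. destruct (Hali (exp x)) as [B1 _]. pose proof (exp_pos x).
  apply Rdiv_lt_0_compat; nra.
Qed.

Lemma L_eq ali (Hali : is_ali ali) x : 0 < x -> ln (ali (exp x)) = x * DD ali x.
Proof.
  intros Hx. pose proof (uu_pos ali Hali x Hx) as Hu. pose proof (exp_pos x).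
  assert (E1 : ali (exp x) = x * exp x * uu ali x) by (unfold uu; field; lra).
  rewrite E1, !ln_mult, ln_exp by nra. unfold DD, tt, ss. field. lra.
Qed.

Lemma master ali (Hali : is_ali ali) K : exists A B X, 0 < X /\ forall x, X <= x ->
  0 < DD ali x /\ 0 < uu ali x /\
  Rabs (1 - (uu ali x / DD ali x) * Hs K (ss x / DD ali x))
    <= A * exp (- x) + B * (uu ali x / DD ali x) * (ss x / DD ali x) ^ K.
Proof.
  set (y0 := ali (exp 0)).
  destruct (Hali (exp 0)) as [Hy0 _]. fold y0 in Hy0.
  destruct (li_bound K y0 Hy0) as [A [B [Y [HY HB]]]].
  pose proof (ln_pos1 y0 Hy0) as Hly0.
  exists (A + 1), B, (Rmax 1 (ln (Y / ln y0))). split. { pose proof (Rmax_l 1 (ln (Y / ln y0))). lra. }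
  intros x Hx.
  assert (Hx1 : 1 <= x) by (eapply Rle_trans; [apply Rmax_l|exact Hx]).
  assert (Hx2 : ln (Y / ln y0) <= x) by (eapply Rle_trans; [apply Rmax_r|exact Hx]).
  destruct (g_lower ali Hali x ltac:(lra)) as [G1 G2]. fold y0 in G1, G2.
  set (y := ali (exp x)) in *.
  assert (HYy : Y <= y).
  { assert (Y / ln y0 <= exp x).
    { rewrite <- (exp_ln (Y / ln y0)) by (apply Rdiv_lt_0_compat; lra). apply exp_le; auto. }
    apply Rle_trans with (ln y0 * exp x); auto.
    apply (Rmult_le_reg_r (/ ln y0)). apply Rinv_0_lt_compat; auto.
    replace (ln y0 * exp x * / ln y0) with (exp x) by (field; lra). unfold Rdiv in H. lra. }
  assert (Hy1 : 1 < y) by lra.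
  pose proof (ln_pos1 y Hy1) as HL.
  pose proof (L_eq ali Hali x ltac:(lra)) as HLe. fold y in HLe.
  pose proof (uu_pos ali Hali x ltac:(lra)) as Hu.
  assert (HD : 0 < DD ali x).
  { rewrite HLe in HL. apply (Rmult_lt_reg_l x); lra. }
  split; auto. split; auto.
  set (u := uu ali x) in *. set (D := DD ali x) in *.
  set (w := ss x / D).
  assert (Hw : lm 1 y = w) by (unfold lm, w, ss; rewrite pow_1, HLe; field; lra).
  assert (Hyu : y = x * exp x * u) by (unfold u, uu, y; field; pose proof (exp_pos x); lra).
  pose proof (exp_pos x) as Hex.
  assert (Hyw : y * w = exp x * (u / D)) by (rewrite Hyu; unfold w, ss; field; lra).
  pose proof (HB y HYy) as H1.

  pose proof (g_int ali Hali x) as HI. fold y0 y in HI.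
  assert (HR : RInt (lm 1) y0 y = exp x - 1).
  { rewrite HI, exp_0. reflexivity. }
  rewrite HR in H1. rewrite Ssum_eq in H1 by auto. rewrite Hw, Hyw in H1.
  rewrite lm_S, Hw in H1 by auto.
  replace (y * w ^ S K) with (exp x * (u / D) * w ^ K) in H1
    by (rewrite <- Hyw; simpl; ring).
  assert (Hee : exp (- x) * exp x = 1) by (rewrite <- exp_plus; replace (-x + x) with 0 by ring; apply exp_0).
  pose proof (exp_pos (-x)).
  replace (1 - u / D * Hs K w) with (exp (- x) * (exp x - 1 - exp x * (u / D) * Hs K w) + exp (- x))
    by (symmetry; replace (exp (- x) * (exp x - 1 - exp x * (u / D) * Hs K w) + exp (- x))
          with (exp (-x) * exp x - (exp (-x) * exp x) * (u/D) * Hs K w) by ring; rewrite Hee; ring).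
  eapply Rle_trans; [apply Rabs_triang|].
  rewrite Rabs_mult, (Rabs_pos_eq (exp (-x))) by lra.
  assert (H2 : exp (- x) * Rabs (exp x - 1 - exp x * (u / D) * Hs K w) <= exp (-x) * (A + B * (exp x * (u / D) * w ^ K)))
    by (apply Rmult_le_compat_l; lra).
  replace (exp (- x) * (A + B * (exp x * (u / D) * w ^ K))) with
    (A * exp (-x) + B * (u / D) * w ^ K * (exp (-x) * exp x)) in H2 by ring.
  rewrite Hee in H2. lra.
Qed.


Definition ev (P : R -> Prop) := exists X, forall x, X <= x -> P x.

Lemma ev_and (P Q : R -> Prop) : ev P -> ev Q -> ev (fun x => P x /\ Q x).
Proof.
  intros [X1 H1] [X2 H2]. exists (Rmax X1 X2). intros x Hx. split.
  apply H1; eapply Rle_trans; [apply Rmax_l|exact Hx].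
  apply H2; eapply Rle_trans; [apply Rmax_r|exact Hx].
Qed.

Lemma ev_impl (P Q : R -> Prop) : ev P -> (forall x, P x -> Q x) -> ev Q.
Proof. intros [X H] H'. exists X. auto. Qed.

Lemma ev_ge a : ev (fun x => a <= x).
Proof. exists a. auto. Qed.

Lemma Ob_ev f g : Ob f g <-> exists C, ev (fun x => Rabs (f x) <= C * g x).
Proof.
  split. intros [C [X H]]. exists C, X. auto.
  intros [C [X H]]. exists C, X. auto.
Qed.

Lemma ev_xe : ev (fun x => 0 < x /\ 1 <= ln x /\ 0 < ss x /\ ss x <= tt x /\ tt x <= 1).
Proof. exists (exp 1). apply xe_facts. Qed.

Lemma Ob_small_ev f eps : Ob f tt -> 0 < eps -> ev (fun x => Rabs (f x) <= eps).
Proof. intros. destruct (Ob_small f eps H H0) as [X HX]. exists X. auto. Qed.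

Lemma Ob_expm n : Ob (fun x => exp (- x)) (fun x => tt x ^ n).
Proof.
  destruct (pow_le_Cexp n) as [C [HC H]]. apply Ob_ev. exists C.
  eapply ev_impl; [apply ev_xe|]. intros x (Hx&Hl&Hs0&Hst&Ht1).
  rewrite Rabs_pos_eq by (left; apply exp_pos).
  pose proof (H x ltac:(lra)) as H1.
  assert (Hss : ss x ^ n <= tt x ^ n) by (apply pow_incr; lra).
  assert (E1 : ss x ^ n * x ^ n = 1) by (rewrite <- Rpow_mult_distr; unfold ss; rewrite Rinv_l by lra; apply pow1).
  assert (Hee : exp (- x) * exp x = 1) by (rewrite <- exp_plus; replace (-x + x) with 0 by ring; apply exp_0).
  pose proof (exp_pos (-x)). pose proof (exp_pos x).
  assert (0 <= ss x ^ n) by (apply pow_le; lra).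
  assert (exp (-x) <= C * ss x ^ n).
  { (* exp(-x) = exp(-x) * (ss^n x^n) <= exp(-x) ss^n C e^x *)
    replace (exp (-x)) with (exp (-x) * (ss x ^ n * x ^ n)) by (rewrite E1; ring).
    assert (exp (-x) * (ss x ^ n * x ^ n) <= exp (-x) * (ss x ^ n * (C * exp x))).
    { apply Rmult_le_compat_l; [lra|]. apply Rmult_le_compat_l; auto. }
    replace (exp (-x) * (ss x ^ n * (C * exp x))) with (C * ss x ^ n * (exp (-x) * exp x)) in H4 by ring.
    rewrite Hee in H4. lra. }
  nra.
Qed.

Lemma Ob_tt1 f : Ob f (fun x => tt x ^ 1) -> Ob f tt.
Proof. intros [C [X H]]. exists C, X. intros x Hx. rewrite <- (pow_1 (tt x)). auto. Qed.

Lemma Ob_tt1' f : Ob f tt -> Ob f (fun x => tt x ^ 1).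
Proof. intros [C [X H]]. exists C, X. intros x Hx. rewrite (pow_1 (tt x)). auto. Qed.

Lemma base_u ali (Hali : is_ali ali) : Ob (fun x => uu ali x - 1) tt /\
  ev (fun x => 0 < DD ali x /\ 0 < uu ali x).
Proof.
  set (y0 := ali (exp 0)). destruct (Hali (exp 0)) as [Hy0 _]. fold y0 in Hy0.
  set (c := ln y0). assert (Hc : 0 < c) by (apply ln_pos1; auto).
  destruct (master ali Hali 1) as [A [B [X0 [HX0 HM]]]].
  (* w = 1/ln y is small *)
  assert (Hw : ev (fun x => 0 < x /\ x + ln c <= x * DD ali x)).
  { exists (Rmax 1 X0). intros x Hx. assert (1 <= x) by (eapply Rle_trans; [apply Rmax_l|exact Hx]).
    split; [lra|]. destruct (g_lower ali Hali x ltac:(lra)) as [G1 G2]. fold y0 c in G2.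
    rewrite <- (L_eq ali Hali x) by lra.
    replace (x + ln c) with (ln (exp x * c)) by (rewrite ln_mult, ln_exp; [reflexivity| apply exp_pos| auto]).
    pose proof (exp_pos x). apply ln_le. nra. nra. }
  assert (Hex : Ob (fun x => exp (- x)) tt) by (apply Ob_tt1; apply Ob_expm).
  assert (HA4 : 0 < / (4 * (Rabs A + 1))) by (apply Rinv_0_lt_compat; pose proof (Rabs_pos A); lra).
  pose proof (Ob_small_ev _ _ Hex HA4) as Hex2.
  set (K0 := 10 * (Rabs B + 1)).
  assert (HK0 : 0 < K0) by (unfold K0; pose proof (Rabs_pos B); lra).
  pose proof (ev_and _ _ Hw (ev_and _ _ Hex2 (ev_and _ _ ev_xe (ev_and _ _ (ev_ge X0)
     (ev_and _ _ (ev_ge (K0 - ln c + 1)) (ev_and _ _ (ev_ge (2 * Rabs (ln c) + 1)) (ev_ge 10))))))) as EV.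
  assert (EV2 : ev (fun x => 0 < DD ali x /\ 0 < uu ali x /\ 1/2 <= DD ali x /\ DD ali x <= 12 /\
               Rabs (ln (uu ali x)) <= 10 /\ ss x / DD ali x <= 2 * ss x /\
               uu ali x / DD ali x <= 5/2 /\
               Rabs (1 - uu ali x / DD ali x) <= A * exp (- x) + B * (uu ali x / DD ali x) * (ss x / DD ali x))).
  { eapply ev_impl; [exact EV|]. intros x ((W1 & W2) & E1 & (Hx&Hl&Hs0&Hst&Ht1) & HXx & Hx3 & Hx4 & Hx5).
    destruct (HM x HXx) as (HD & Hu & Hr). simpl Hs in Hr.
    set (u := uu ali x) in *. set (D := DD ali x) in *.
    replace (0 + INR (fact 0) * (ss x / D) ^ 0) with 1 in Hr by (simpl; ring).
    rewrite Rmult_1_r, pow_1 in Hr.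
    assert (Hr0 : 0 < u / D) by (apply Rdiv_lt_0_compat; auto).
    assert (HsD : ss x / D = / (x * D)) by (unfold ss; field; lra).
    assert (Hxc : 0 < x + ln c) by (pose proof (Rle_abs (- ln c)); rewrite Rabs_Ropp in H; lra).
    assert (HwK : ss x / D <= / K0).
    { rewrite HsD. apply Rinv_le_contravar; lra. }
    assert (Hw0 : 0 < ss x / D) by (apply Rdiv_lt_0_compat; auto).
    assert (HBw : Rabs B * (ss x / D) <= 1/10).
    { apply Rle_trans with (Rabs B * / K0). apply Rmult_le_compat_l; [apply Rabs_pos|auto].
      unfold K0. apply (Rmult_le_reg_r (10 * (Rabs B + 1))). pose proof (Rabs_pos B); lra.
      field_simplify; [|pose proof (Rabs_pos B); lra]. pose proof (Rabs_pos B); lra. }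
    assert (HAe : A * exp (- x) <= 1/4).
    { rewrite Rabs_pos_eq in E1 by (left; apply exp_pos).
      pose proof (Rle_abs A). pose proof (exp_pos (-x)). pose proof (Rabs_pos A).
      apply Rle_trans with (Rabs A * exp (-x)). nra.
      apply Rle_trans with (Rabs A * / (4 * (Rabs A + 1))). apply Rmult_le_compat_l; auto.
      apply (Rmult_le_reg_r (4 * (Rabs A + 1))); [lra|]. field_simplify; lra. }
    assert (HBr : B * (u / D) * (ss x / D) <= (u / D) * (1/10)).
    { pose proof (Rle_abs B). assert (B * (ss x / D) <= 1/10) by nra. nra. }
    apply Rabs_le_between in Hr.
    assert (Hrle : u / D <= 5/2) by lra.
    assert (Hrge : 1/2 <= u / D) by lra.
    destruct (g_lower ali Hali x ltac:(lra)) as [G1 G2]. fold y0 c in G2.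
    assert (Hucx : c / x <= u).
    { unfold u, uu. pose proof (exp_pos x). apply (Rmult_le_reg_r (x * exp x)); [nra|].
      field_simplify; [|lra|nra]. nra. }
    assert (Hlnu : ln c - ln x <= ln u).
    { rewrite <- ln_div by lra. apply ln_le; auto. apply Rdiv_lt_0_compat; lra. }
    assert (Hslnc : Rabs (ss x * ln c) <= 1/2).
    { rewrite Rabs_mult, Rabs_pos_eq by lra. unfold ss.
      apply (Rmult_le_reg_r x); [lra|]. field_simplify; lra. }
    assert (HsL : ss x * ln c - tt x <= ss x * ln u).
    { unfold tt. replace (ln x / x) with (ss x * ln x) by (unfold ss, Rdiv; ring).
      assert (ss x * (ln c - ln x) <= ss x * ln u) by (apply Rmult_le_compat_l; lra). lra. }
    assert (HD2 : 1/2 <= D).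
    { unfold D, DD. fold u. apply Rabs_le_between in Hslnc. lra. }
    pose proof (ln_lt_id u Hu) as Hlu.
    assert (Hu1 : u <= 10).
    { assert (u = (u / D) * D) by (field; lra).
      assert (D <= 1 + tt x + ss x * u).
      { unfold D, DD. fold u. assert (ss x * ln u <= ss x * u) by (apply Rmult_le_compat_l; lra). lra. }
      assert (ss x <= / 10) by (unfold ss; apply Rinv_le_contravar; lra).
      nra. }
    assert (Hu2 : 1/4 <= u) by (assert (u = (u / D) * D) by (field; lra); nra).
    assert (Hlnu2 : Rabs (ln u) <= 10).
    { apply Rabs_le. split; [|lra].
      assert (ln (1/4) <= ln u) by (apply ln_le; lra).
      assert (ln 4 < 4) by (apply ln_lt_id; lra).
      replace (ln (1/4)) with (- ln 4) in H by (unfold Rdiv; rewrite Rmult_1_l, ln_Rinv by lra; ring).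
      lra. }
    assert (HD12 : D <= 12).
    { unfold D, DD. fold u. apply Rabs_le_between in Hlnu2.
      assert (ss x * ln u <= ss x * 10) by (apply Rmult_le_compat_l; lra).
      assert (ss x <= 1/10) by (unfold ss; apply (Rmult_le_reg_r x); [lra|]; field_simplify; lra). lra. }
    repeat split; auto; try lra.
    - unfold Rdiv. apply Rle_trans with (ss x * 2); [|lra]. apply Rmult_le_compat_l; [lra|]. apply (Rmult_le_reg_r D); [lra|].
      rewrite Rinv_l by lra. lra.
    - apply Rabs_le_between. lra. }
  split; [|apply (ev_impl _ _ EV2); intros x H; destruct H as (H1&H2&_); split; assumption].
  apply Ob_ev in Hex. destruct Hex as [Ce HCe].
  apply Ob_ev. exists (12 * (Rabs A * Ce + 5 * Rabs B) + 11).
  eapply ev_impl; [apply (ev_and _ _ EV2 (ev_and _ _ HCe ev_xe))|].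
  intros x ((HD & Hu & HD2 & HD12 & Hlnu & Hw2 & Hr52 & Hr) & He & (Hx&Hl&Hs0&Hst&Ht1)).
  set (u := uu ali x) in *. set (D := DD ali x) in *.
  set (r := u / D) in *.
  assert (Hr0 : 0 < r) by (apply Rdiv_lt_0_compat; auto).
  assert (Hw0 : 0 < ss x / D) by (apply Rdiv_lt_0_compat; auto).
  rewrite Rabs_pos_eq in He by (left; apply exp_pos).
  assert (H1 : A * exp (- x) <= Rabs A * (Ce * tt x)).
  { pose proof (Rle_abs A). pose proof (exp_pos (-x)). pose proof (Rabs_pos A). 
    apply Rle_trans with (Rabs A * exp (-x)); [nra|]. apply Rmult_le_compat_l; auto. }
  assert (H2 : B * r * (ss x / D) <= 5 * Rabs B * tt x).
  { pose proof (Rle_abs B). pose proof (Rabs_pos B).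
    apply Rle_trans with (Rabs B * r * (ss x / D)). 
    { apply Rmult_le_compat_r; [lra|]. apply Rmult_le_compat_r; lra. }
    apply Rle_trans with (Rabs B * (5/2) * (2 * tt x)).
    { apply Rmult_le_compat; try nra. }
    lra. }
  assert (Hr1 : Rabs (r - 1) <= (Rabs A * Ce + 5 * Rabs B) * tt x).
  { rewrite <- Rabs_Ropp. replace (- (r - 1)) with (1 - r) by ring. nra. }
  assert (HD1 : Rabs (D - 1) <= 11 * tt x).
  { unfold D, DD. fold u. replace (1 + tt x + ss x * ln u - 1) with (tt x + ss x * ln u) by ring.
    eapply Rle_trans; [apply Rabs_triang|]. rewrite Rabs_mult, (Rabs_pos_eq (tt x)), (Rabs_pos_eq (ss x)) by lra.
    assert (ss x * Rabs (ln u) <= tt x * 10) by (apply Rmult_le_compat; try lra; apply Rabs_pos). lra. }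
  replace (u - 1) with ((r - 1) * D + (D - 1)) by (unfold r; field; lra).
  eapply Rle_trans; [apply Rabs_triang|]. rewrite Rabs_mult, (Rabs_pos_eq D) by lra.
  assert (Rabs (r - 1) * D <= (Rabs A * Ce + 5 * Rabs B) * tt x * 12)
    by (apply Rmult_le_compat; try lra; apply Rabs_pos).
  lra.
Qed.


Lemma Ob_dom f g h : ev (fun x => Rabs (f x) <= g x) -> Ob g h -> Ob f h.
Proof.
  intros [X1 H1] [C [X2 H2]]. exists C, (Rmax X1 X2). intros x Hx.
  pose proof (H1 x (Rle_trans _ _ _ (Rmax_l _ _) Hx)).
  pose proof (H2 x (Rle_trans _ _ _ (Rmax_r _ _) Hx)).
  pose proof (Rle_abs (g x)). lra.
Qed.

Lemma E_Hs N K w : E N w -> E N (fun x => Hs K (w x)).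
Proof.
  intros H. induction K; cbn [Hs].
  - apply E_const.
  - apply (E_plus N (fun x => Hs K (w x))); auto.
    apply (E_scal N (INR (fact K)) (fun x => w x ^ K)). apply E_pow; auto.
Qed.

Lemma Hs_0 K : Hs (S K) 0 = 1.
Proof.
  induction K. simpl. ring.
  cbn [Hs] in *. rewrite IHK. rewrite pow_i by lia. ring.
Qed.

Lemma Hs_lip K w : Rabs w <= 1 -> Rabs (Hs K w - Hs K 0) <= Hs K 1 * Rabs w.
Proof.
  intros Hw. induction K; cbn [Hs].
  - rewrite Rminus_0_r, Rabs_R0. lra.
  - replace (Hs K w + INR (fact K) * w ^ K - (Hs K 0 + INR (fact K) * 0 ^ K))
      with ((Hs K w - Hs K 0) + INR (fact K) * (w ^ K - 0 ^ K)) by ring.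
    eapply Rle_trans; [apply Rabs_triang|]. rewrite pow1.
    assert (Rabs (INR (fact K) * (w ^ K - 0 ^ K)) <= INR (fact K) * Rabs w).
    { rewrite Rabs_mult, (Rabs_pos_eq (INR (fact K))) by apply pos_INR.
      apply Rmult_le_compat_l; [apply pos_INR|].
      destruct K. simpl. rewrite Rminus_diag, Rabs_R0. apply Rabs_pos.
      rewrite pow_i by lia. rewrite Rminus_0_r, <- RPow_abs.
      replace (S K) with (1 + K)%nat by lia. rewrite pow_add, pow_1.
      assert (Rabs w ^ K <= 1) by (rewrite <- (pow1 K); apply pow_incr; split; [apply Rabs_pos|auto]).
      pose proof (Rabs_pos w). nra. }
    lra.
Qed.

Lemma Ob_ss_tt f : Ob f (fun _ => 1) -> Ob (fun x => ss x * f x) tt.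
Proof.
  intros H.
  assert (Hs : Ob ss ss) by (apply Ob_refl; exists (exp 1); intros x Hx; destruct (xe_facts x Hx) as (?&?&?&?&?); lra).
  pose proof (Ob_mul _ _ _ _ Hs H). eapply Ob_le; [exact H0|].
  exists (exp 1), 1. intros x Hx; destruct (xe_facts x Hx) as (?&?&?&?&?). lra.
Qed.

Lemma step ali (Hali : is_ali ali) N : E N (uu ali) -> Ob (fun x => uu ali x - 1) tt ->
  E (S N) (uu ali).
Proof.
  intros HE Hv.
  set (u := uu ali) in *.
  assert (Elnu : E N (fun x => ln (u x))).
  { apply (E_ext N (fun x => ln (1 + (u x - 1)))).
    exists 0. intros. f_equal. ring.
    apply E_ln; auto. apply E_minus; auto. apply E_const. }
  set (D := DD ali).
  assert (ED : E (S N) D).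
  { apply (E_ext (S N) (fun x => (1 + tt x) + ss x * ln (u x))). exists 0; intros; reflexivity.
    apply E_plus. apply E_plus. apply E_const. apply E_tt. apply E_ss_mul. auto. }
  assert (OD : Ob (fun x => D x - 1) tt).
  { apply (Ob_ext (fun x => tt x + ss x * ln (u x))). exists 0. intros. unfold D, DD. fold u. ring.
    apply Ob_plus. apply Ob_refl. exists (exp 1). intros x Hx. pose proof (tt_pos x Hx). lra.
    apply Ob_ss_tt. apply (E_bd N). auto. }
  set (invD := fun x => / D x).
  assert (EiD : E (S N) invD).
  { apply (E_ext (S N) (fun x => / (1 + (D x - 1)))). exists 0. intros. unfold invD. f_equal. ring.
    apply E_inv; auto. apply E_minus; auto. apply E_const. }
  set (w := fun x => ss x / D x).
  assert (Ew : E (S N) w).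
  { apply (E_ext (S N) (fun x => ss x * invD x)). exists 0. intros. reflexivity.
    apply E_mul; auto. apply E_ss. }
  assert (Ow : Ob w tt).
  { apply (Ob_ext (fun x => ss x * invD x)). exists 0; intros; reflexivity.
    apply Ob_ss_tt. apply (E_bd (S N)). auto. }
  set (K := S (S N)).
  set (H := fun x => Hs K (w x)).
  assert (EH : E (S N) H) by (apply E_Hs; auto).
  assert (OH : Ob (fun x => H x - 1) tt).
  { apply (Ob_dom _ (fun x => Hs K 1 * Rabs (w x))).
    - destruct (Ob_small_ev w 1 Ow ltac:(lra)) as [X HX]. exists X. intros x Hx.
      unfold H. replace (Hs K (w x) - 1) with (Hs K (w x) - Hs K 0) by (unfold K; rewrite Hs_0; ring).
      apply Hs_lip. auto.
    - apply Ob_scal. destruct Ow as [C [X HX]]. exists C, X. intros x Hx. rewrite Rabs_Rabsolu. auto. }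
  set (invH := fun x => / H x).
  assert (EiH : E (S N) invH).
  { apply (E_ext (S N) (fun x => / (1 + (H x - 1)))). exists 0. intros. unfold invH. f_equal. ring.
    apply E_inv; auto. apply E_minus; auto. apply E_const. }
  assert (Etarget : E (S N) (fun x => D x * invH x)) by (apply E_mul; auto).
  apply (E_close _ _ _ Etarget).
  destruct (master ali Hali K) as [A [B [X0 [HX0 HM]]]].
  set (R1 := fun x => 1 - (u x / D x) * H x).
  assert (OR1 : Ob R1 (fun x => tt x ^ S (S N))).
  { apply (Ob_dom _ (fun x => A * exp (- x) + B * (u x * invD x) * w x ^ K)).
    - exists X0. intros x Hx. destruct (HM x Hx) as (_ & _ & Hb). exact Hb.
    - apply Ob_plus. apply Ob_scal. apply Ob_expm.
      apply Ob_Bmul.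
      + apply (Ob_scal B (fun x => u x * invD x)).
        apply (Ob_mulB u invD (fun _ => 1)); [apply (E_bd N); auto| apply (E_bd (S N)); auto].
      + apply (Ob_pow w tt K). auto. }
  apply (Ob_ext (fun x => (- (D x * invH x)) * R1 x)).
  - destruct (Ob_small_ev _ (1/2) OH ltac:(lra)) as [X1 HX1].
    exists (Rmax X0 X1). intros x Hx.
    destruct (HM x (Rle_trans _ _ _ (Rmax_l _ _) Hx)) as (HD & _ & _).
    pose proof (HX1 x (Rle_trans _ _ _ (Rmax_r _ _) Hx)) as HH.
    apply Rabs_le_between in HH.
    unfold R1, invH. fold D in HD. field. lra.
  - apply Ob_Bmul; auto. apply Ob_opp. apply (E_bd (S N)). auto.
Qed.

Lemma all_E ali (Hali : is_ali ali) N : E N (uu ali).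
Proof.
  destruct (base_u ali Hali) as [Hb _].
  induction N.
  - apply (E_close 0 (fun _ => 1)). apply E_const.
    apply Ob_tt1'. exact Hb.
  - apply step; auto.
Qed.


Lemma vanish a K J X : (forall x, X <= x -> Rabs a <= K * (ln x ^ J / x) + K / ln x) -> a = 0.
Proof.
  intros H. destruct (pow_le_Cexp (S J)) as [C [HC HC']].
  destruct (Req_dec a 0) as [|Ha]; auto. exfalso.
  assert (Ha' : 0 < Rabs a) by (apply Rabs_pos_lt; auto).
  set (M := Rabs K * C + Rabs K).
  assert (HM : 0 <= M) by (unfold M; pose proof (Rabs_pos K); nra).
  set (z := Rmax (Rmax 1 (ln (Rmax X 1))) (2 * M / Rabs a + 1)).
  assert (Hz1 : 1 <= z) by (unfold z; eapply Rle_trans; [|apply Rmax_l]; apply Rmax_l).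
  assert (Hz2 : ln (Rmax X 1) <= z) by (unfold z; eapply Rle_trans; [|apply Rmax_l]; apply Rmax_r).
  assert (Hz3 : 2 * M / Rabs a + 1 <= z) by (unfold z; apply Rmax_r).
  set (x := exp z).
  assert (Hx : X <= x).
  { unfold x. apply Rle_trans with (Rmax X 1); [apply Rmax_l|].
    rewrite <- (exp_ln (Rmax X 1)) by (pose proof (Rmax_r X 1); lra).
    destruct (Rle_lt_or_eq_dec _ _ Hz2) as [h|h]; [left; apply exp_increasing; auto| rewrite h; lra]. }
  pose proof (H x Hx) as H1. unfold x in H1. rewrite ln_exp in H1.
  pose proof (HC' z ltac:(lra)) as H2.
  pose proof (exp_pos z).
  assert (H3 : z ^ J / exp z <= C / z).
  { apply (Rmult_le_reg_r (exp z * z)); [nra|]. field_simplify; try lra.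
    simpl in H2. nra. }
  assert (H4 : K * (z ^ J / exp z) + K / z <= M / z).
  { unfold M. pose proof (Rle_abs K). pose proof (Rabs_pos K).
    assert (0 <= z ^ J / exp z) by (apply Rdiv_le_0_compat; [apply pow_le|]; lra).
    assert (K * (z ^ J / exp z) <= Rabs K * (C / z)).
    { apply Rle_trans with (Rabs K * (z ^ J / exp z)). nra. apply Rmult_le_compat_l; auto. }
    assert (K / z <= Rabs K / z) by (unfold Rdiv; apply Rmult_le_compat_r; [left; apply Rinv_0_lt_compat; lra| auto]).
    unfold Rdiv in *. lra. }
  assert (H5 : M / z < Rabs a).
  { apply (Rmult_lt_reg_r z); [lra|]. unfold Rdiv. rewrite Rmult_assoc, Rinv_l, Rmult_1_r by lra.
    assert (2 * M / Rabs a * Rabs a = 2 * M) by (field; lra).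
    assert (Rabs a * (2 * M / Rabs a + 1) <= Rabs a * z) by (apply Rmult_le_compat_l; lra).
    nra. }
  lra.
Qed.

Lemma sum_shift f N : sum_f_R0 f (S N) = f 0%nat + sum_f_R0 (fun i => f (S i)) N.
Proof.
  induction N.
  - simpl. ring.
  - rewrite tech5, IHN. simpl. ring.
Qed.

Lemma ln_ge1 x : exp 1 <= x -> 1 <= ln x.
Proof. intros H. destruct (xe_facts x H) as (?&?&?&?&?); auto. Qed.

Lemma PZ M : forall c C J X, (forall x, X <= x ->
   Rabs (sum_f_R0 (fun k => c k * ln x ^ k) M) <= C * (ln x ^ J / x)) ->
   forall k, (k <= M)%nat -> c k = 0.
Proof.
  induction M as [|M IH]; intros c C J X H k Hk.
  - assert (k = 0%nat) by lia. subst k.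
    apply (vanish _ (Rabs C) J (Rmax X (exp 1))). intros x Hx.
    pose proof (H x (Rle_trans _ _ _ (Rmax_l _ _) Hx)) as H1.
    pose proof (ln_ge1 x (Rle_trans _ _ _ (Rmax_r _ _) Hx)).
    assert (0 < x) by (pose proof (Rmax_r X (exp 1)); pose proof (exp_pos 1); lra).
    simpl in H1. rewrite Rmult_1_r in H1.
    assert (0 <= ln x ^ J / x) by (apply Rdiv_le_0_compat; [apply pow_le|]; lra).
    assert (C * (ln x ^ J / x) <= Rabs C * (ln x ^ J / x)) by (apply Rmult_le_compat_r; [auto|apply Rle_abs]).
    assert (0 <= Rabs C / ln x) by (apply Rdiv_le_0_compat; [apply Rabs_pos|lra]).
    lra.
  - set (T := sum_f_R0 (fun k => Rabs (c k)) M).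
    assert (HT : 0 <= T).
    { unfold T. clear. induction M; simpl. apply Rabs_pos. pose proof (Rabs_pos (c (S M))); lra. }
    assert (Hc : c (S M) = 0).
    { apply (vanish _ (Rabs C + T) J (Rmax X (exp 1))). intros x Hx.
      pose proof (H x (Rle_trans _ _ _ (Rmax_l _ _) Hx)) as H1.
      pose proof (ln_ge1 x (Rle_trans _ _ _ (Rmax_r _ _) Hx)) as Hl.
      assert (Hx0 : 0 < x) by (pose proof (Rmax_r X (exp 1)); pose proof (exp_pos 1); lra).
      rewrite tech5 in H1.
      assert (H2 : Rabs (sum_f_R0 (fun k => c k * ln x ^ k) M) <= T * ln x ^ M).
      { eapply Rle_trans; [apply Rsum_abs|]. unfold T. rewrite Rmult_comm, scal_sum.
        apply sum_Rle. intros n Hn. rewrite Rabs_mult, <- RPow_abs, (Rabs_pos_eq (ln x)) by lra.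
        apply Rmult_le_compat_l; [apply Rabs_pos|]. apply Rle_pow; auto. }
      assert (H3 : Rabs (c (S M) * ln x ^ S M) <= C * (ln x ^ J / x) + T * ln x ^ M).
      { replace (c (S M) * ln x ^ S M) with
          ((sum_f_R0 (fun k => c k * ln x ^ k) M + c (S M) * ln x ^ S M) - sum_f_R0 (fun k => c k * ln x ^ k) M) by ring.
        eapply Rle_trans; [apply Rabs_triang|]. rewrite Rabs_Ropp. lra. }
      rewrite Rabs_mult, <- RPow_abs, (Rabs_pos_eq (ln x)) in H3 by lra.
      assert (Hp : 0 < ln x ^ M) by (apply pow_lt; lra).
      assert (Hp1 : 1 <= ln x ^ M) by (rewrite <- (pow1 M); apply pow_incr; lra).
      assert (E1 : ln x ^ S M = ln x * ln x ^ M) by reflexivity.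
      rewrite E1 in H3.
      assert (0 <= ln x ^ J / x) by (apply Rdiv_le_0_compat; [apply pow_le|]; lra).
      assert (HCa : C * (ln x ^ J / x) <= Rabs C * (ln x ^ J / x)) by (apply Rmult_le_compat_r; [auto|apply Rle_abs]).
      (* |c| ln ln^M <= |C| q + T ln^M  => |c| <= |C| q / (ln ln^M) + T / ln <= |C| q + T/ln *)
      pose proof (Rabs_pos (c (S M))). pose proof (Rabs_pos C).
      set (q := ln x ^ J / x) in *. set (P := ln x * ln x ^ M).
      assert (HP : 1 <= P) by (unfold P; nra).
      apply (Rmult_le_reg_r P); [lra|].
      assert (E2 : ((Rabs C + T) * q + (Rabs C + T) / ln x) * P = (Rabs C + T) * q * P + (Rabs C + T) * ln x ^ M)
        by (unfold P; field; lra).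
      rewrite E2.
      assert (Rabs C * q <= Rabs C * q * P) by (rewrite <- (Rmult_1_r (Rabs C * q)) at 1; apply Rmult_le_compat_l; nra).
      assert (Rabs C * q * P <= (Rabs C + T) * q * P) by (apply Rmult_le_compat_r; [lra|]; apply Rmult_le_compat_r; lra).
      assert (T * ln x ^ M <= (Rabs C + T) * ln x ^ M) by (apply Rmult_le_compat_r; lra).
      fold P in H3. lra. }
    destruct (Nat.eq_dec k (S M)) as [Hk'|Hk'].
    + subst k. auto.
    + apply (IH c C J X); [|lia]. intros x Hx. pose proof (H x Hx) as H1.
      rewrite tech5, Hc, Rmult_0_l, Rplus_0_r in H1. auto.
Qed.

Definition DS (d : nat -> nat -> R) (N M : nat) (x : R) : R :=
  sum_f_R0 (fun n => sum_f_R0 (fun k => d n k * ln x ^ k / x ^ n) M) N.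

Definition DSabs (d : nat -> nat -> R) (N M : nat) : R :=
  sum_f_R0 (fun n => sum_f_R0 (fun k => Rabs (d n k)) M) N.

Lemma sum_nonneg f N : (forall n, 0 <= f n) -> 0 <= sum_f_R0 f N.
Proof. intros H. induction N; simpl; auto. pose proof (H (S N)). lra. Qed.

Lemma DSabs_nonneg d N M : 0 <= DSabs d N M.
Proof. apply sum_nonneg. intros. apply sum_nonneg. intros. apply Rabs_pos. Qed.

Lemma DS_bound d N M x : exp 1 <= x -> Rabs (DS d N M x) <= DSabs d N M * ln x ^ M.
Proof.
  intros Hx. destruct (xe_facts x Hx) as (Hx0&Hl&_&_&_).
  pose proof (exp_ge1 1 ltac:(lra)).
  unfold DS, DSabs. eapply Rle_trans; [apply Rsum_abs|].
  rewrite Rmult_comm, scal_sum. apply sum_Rle. intros n Hn.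
  eapply Rle_trans; [apply Rsum_abs|].
  rewrite Rmult_comm, scal_sum. apply sum_Rle. intros k Hk.
  unfold Rdiv. rewrite !Rabs_mult, <- RPow_abs, (Rabs_pos_eq (ln x)) by lra.
  rewrite (Rabs_pos_eq (/ x ^ n)) by (left; apply Rinv_0_lt_compat, pow_lt; lra).
  assert (ln x ^ k <= ln x ^ M) by (apply Rle_pow; auto).
  assert (/ x ^ n <= 1).
  { rewrite <- Rinv_1. apply Rinv_le_contravar; [lra|]. rewrite <- (pow1 n). apply pow_incr; lra. }
  assert (0 < / x ^ n) by (apply Rinv_0_lt_compat, pow_lt; lra).
  assert (0 <= ln x ^ k) by (apply pow_le; lra).
  pose proof (Rabs_pos (d n k)).
  assert (ln x ^ k * / x ^ n <= ln x ^ M) by nra.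
  rewrite Rmult_assoc. apply Rmult_le_compat_l; auto.
Qed.

Lemma DS_0 d M x : DS d 0 M x = sum_f_R0 (fun k => d 0%nat k * ln x ^ k) M.
Proof. unfold DS. simpl. apply sum_eq. intros. field. Qed.

Lemma DS_shift d N M x : 0 < x ->
  DS d (S N) M x = sum_f_R0 (fun k => d 0%nat k * ln x ^ k) M + / x * DS (fun n k => d (S n) k) N M x.
Proof.
  intros Hx. unfold DS. rewrite sum_shift. f_equal.
  - apply sum_eq. intros. simpl. field.
  - rewrite scal_sum. apply sum_eq. intros n Hn. rewrite Rmult_comm, scal_sum.
    apply sum_eq. intros k Hk. simpl. field. repeat split; try apply pow_nonzero; lra.
Qed.

Lemma sum_zero f N : (forall n, (n <= N)%nat -> f n = 0) -> sum_f_R0 f N = 0.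
Proof. intros H. induction N; simpl. apply H; lia. rewrite IHN, H; [ring|lia|]. intros; apply H; lia. Qed.

Lemma U N M : forall d C J X, (forall x, X <= x -> Rabs (DS d N M x) <= C * (ln x ^ J / x ^ S N)) ->
  forall n k, (n <= N)%nat -> (k <= M)%nat -> d n k = 0.
Proof.
  induction N as [|N IH]; intros d C J X H n k Hn Hk.
  - assert (n = 0%nat) by lia. subst n.
    apply (PZ M (d 0%nat) C J X); auto. intros x Hx. rewrite <- DS_0.
    pose proof (H x Hx). simpl in H0. rewrite Rmult_1_r in H0. auto.
  - set (A := DSabs (fun n k => d (S n) k) N M).
    assert (HA : 0 <= A) by apply DSabs_nonneg.
    assert (H0 : forall k, (k <= M)%nat -> d 0%nat k = 0).
    { intros k' Hk'. apply (PZ M (d 0%nat) (Rabs C + A) (J + M) (Rmax X (exp 1))); auto.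
      intros x Hx. pose proof (H x (Rle_trans _ _ _ (Rmax_l _ _) Hx)) as H1.
      assert (Hxe : exp 1 <= x) by (eapply Rle_trans; [apply Rmax_r|exact Hx]).
      destruct (xe_facts x Hxe) as (Hx0&Hl&_&_&_). pose proof (exp_ge1 1 ltac:(lra)).
      rewrite DS_shift in H1 by lra.
      pose proof (DS_bound (fun n k => d (S n) k) N M x Hxe) as H2. fold A in H2.
      set (q := sum_f_R0 (fun k => d 0%nat k * ln x ^ k) M) in *.
      set (R' := DS (fun n k => d (S n) k) N M x) in *.
      assert (Hq : Rabs q <= Rabs (q + / x * R') + / x * Rabs R').
      { replace q with ((q + / x * R') - / x * R') at 1 by ring.
        eapply Rle_trans; [apply Rabs_triang|]. rewrite Rabs_Ropp, Rabs_mult.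
        rewrite (Rabs_pos_eq (/ x)) by (left; apply Rinv_0_lt_compat; lra). lra. }
      assert (Hix : 0 < / x) by (apply Rinv_0_lt_compat; lra).
      assert (HlJ : ln x ^ J <= ln x ^ (J + M)) by (apply Rle_pow; [lra|lia]).
      assert (HlM : ln x ^ M <= ln x ^ (J + M)) by (apply Rle_pow; [lra|lia]).
      assert (Hxp : x <= x ^ S (S N)).
      { rewrite <- (pow_1 x) at 1. apply Rle_pow; [lra|lia]. }
      assert (T1 : C * (ln x ^ J / x ^ S (S N)) <= Rabs C * (ln x ^ (J + M) / x)).
      { apply Rle_trans with (Rabs C * (ln x ^ J / x ^ S (S N))).
        apply Rmult_le_compat_r; [|apply Rle_abs]. apply Rdiv_le_0_compat; [apply pow_le|apply pow_lt]; lra.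
        apply Rmult_le_compat_l; [apply Rabs_pos|]. unfold Rdiv.
        apply Rmult_le_compat; try (apply pow_le; lra); try (left; apply Rinv_0_lt_compat, pow_lt; lra); auto.
        apply Rinv_le_contravar; lra. }
      assert (T2 : / x * Rabs R' <= A * (ln x ^ (J + M) / x)).
      { unfold Rdiv. rewrite (Rmult_comm (ln x ^ (J + M))), <- Rmult_assoc, (Rmult_comm A), Rmult_assoc.
        apply Rmult_le_compat_l; [lra|]. apply Rle_trans with (A * ln x ^ M); auto.
        apply Rmult_le_compat_l; auto. }
      lra. }
    assert (Hsh : forall x, 0 < x -> DS d (S N) M x = / x * DS (fun n k => d (S n) k) N M x).
    { intros x Hx. rewrite DS_shift by auto. rewrite sum_zero; [ring|]. intros k' Hk'. rewrite H0 by auto. ring. }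
    destruct n as [|n].
    + apply H0; auto.
    + apply (IH (fun n k => d (S n) k) C J (Rmax X (exp 1))); try lia.
      intros x Hx. pose proof (H x (Rle_trans _ _ _ (Rmax_l _ _) Hx)) as H1.
      assert (Hxe : exp 1 <= x) by (eapply Rle_trans; [apply Rmax_r|exact Hx]).
      destruct (xe_facts x Hxe) as (Hx0&Hl&_&_&_). pose proof (exp_ge1 1 ltac:(lra)).
      rewrite Hsh in H1 by auto. rewrite Rabs_mult, (Rabs_pos_eq (/ x)) in H1 by (left; apply Rinv_0_lt_compat; lra).
      apply (Rmult_le_reg_l (/ x)); [apply Rinv_0_lt_compat; lra|].
      replace (/ x * (C * (ln x ^ J / x ^ S N))) with (C * (ln x ^ J / x ^ S (S N))).
      auto. change (x ^ S (S N)) with (x * x ^ S N). field. split; [apply pow_nonzero|]; lra.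
Qed.


Definition mcoef (m : mono) (n k : nat) : R :=
  let '(c, a, b) := m in if andb (Nat.eqb a k) (Nat.eqb (a + b) n) then c else 0.
Fixpoint coef (l : list mono) (n k : nat) : R :=
  match l with nil => 0 | m :: l' => mcoef m n k + coef l' n k end.
Definition mabs (m : mono) : R := let '(c, a, b) := m in Rabs c.
Fixpoint labs (l : list mono) : R :=
  match l with nil => 0 | m :: l' => mabs m + labs l' end.

Lemma sum_single f n0 N : (forall n, n <> n0 -> f n = 0) ->
  sum_f_R0 f N = if Nat.leb n0 N then f n0 else 0.
Proof.
  intros H. induction N.
  - simpl. destruct n0; simpl; auto; apply H; lia.
  - rewrite tech5, IHN. destruct (Nat.eq_dec n0 (S N)) as [->|Hne].
    + rewrite (proj2 (Nat.leb_nle (S N) N)) by lia. rewrite Nat.leb_refl. ring.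
    + rewrite (H (S N)) by lia. destruct (Nat.leb n0 N) eqn:E1.
      * apply Nat.leb_le in E1. rewrite (proj2 (Nat.leb_le n0 (S N))) by lia. ring.
      * apply Nat.leb_nle in E1. rewrite (proj2 (Nat.leb_nle n0 (S N))) by lia. ring.
Qed.

Lemma tts_pow x a b : 0 < x -> tt x ^ a * ss x ^ b = ln x ^ a / x ^ (a + b).
Proof.
  intros Hx. unfold tt, ss. unfold Rdiv. rewrite Rpow_mult_distr, !pow_inv, pow_add.
  field. split; apply pow_nonzero; lra.
Qed.

Lemma DS_mono c a b N x : 0 < x ->
  DS (mcoef (c, a, b)) N N x = if Nat.leb (a + b) N then c * ln x ^ a / x ^ (a + b) else 0.
Proof.
  intros Hx. unfold DS.
  rewrite (sum_single _ (a + b)).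
  - destruct (Nat.leb (a + b) N) eqn:E1; auto.
    apply Nat.leb_le in E1.
    rewrite (sum_single _ a).
    + rewrite (proj2 (Nat.leb_le a N)) by lia. simpl. rewrite Nat.eqb_refl, Nat.eqb_refl. simpl. reflexivity.
    + intros k Hk. simpl. rewrite (proj2 (Nat.eqb_neq a k)) by auto. simpl. unfold Rdiv. ring.
  - intros n Hn. apply sum_zero. intros k Hk. simpl.
    rewrite (proj2 (Nat.eqb_neq (a + b) n)) by auto. rewrite Bool.andb_false_r. unfold Rdiv. ring.
Qed.

Lemma DS_cons m l N x : DS (coef (m :: l)) N N x = DS (mcoef m) N N x + DS (coef l) N N x.
Proof.
  unfold DS. rewrite <- sum_plus. apply sum_eq. intros. rewrite <- sum_plus. apply sum_eq. intros.
  simpl. unfold Rdiv. ring.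
Qed.

Lemma trunc l N x : exp 1 <= x -> Rabs (val l x - DS (coef l) N N x) <= labs l * tt x ^ S N.
Proof.
  intros Hx. destruct (xe_facts x Hx) as (Hx0&Hl&Hs0&Hst&Ht1).
  induction l as [|[[c a] b] l IH].
  - simpl. unfold DS. rewrite sum_zero. rewrite Rminus_0_r, Rabs_R0. lra.
    intros n Hn. apply sum_zero. intros. simpl. unfold Rdiv. ring.
  - rewrite DS_cons. cbn [val labs].
    replace (mval (c, a, b) x + val l x - (DS (mcoef (c, a, b)) N N x + DS (coef l) N N x))
      with ((mval (c, a, b) x - DS (mcoef (c, a, b)) N N x) + (val l x - DS (coef l) N N x)) by ring.
    eapply Rle_trans; [apply Rabs_triang|]. rewrite Rmult_plus_distr_r.
    apply Rplus_le_compat; auto.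
    rewrite DS_mono by auto. simpl mval. simpl mabs.
    destruct (Nat.leb (a + b) N) eqn:E1.
    + rewrite Rmult_assoc, tts_pow by auto. unfold Rdiv. rewrite Rmult_assoc, Rminus_diag, Rabs_R0.
      apply Rmult_le_pos; [apply Rabs_pos| apply pow_le; lra].
    + apply Nat.leb_nle in E1. rewrite Rminus_0_r, !Rabs_mult, <- !RPow_abs.
      rewrite (Rabs_pos_eq (tt x)), (Rabs_pos_eq (ss x)) by lra.
      rewrite Rmult_assoc. apply Rmult_le_compat_l; [apply Rabs_pos|].
      apply Rle_trans with (tt x ^ a * tt x ^ b).
      { apply Rmult_le_compat_l; [apply pow_le; lra|]. apply pow_incr; lra. }
      rewrite <- pow_add. replace (a + b)%nat with (S N + (a + b - S N))%nat by lia.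
      rewrite pow_add. assert (tt x ^ (a + b - S N) <= 1) by (rewrite <- (pow1 (a + b - S N)); apply pow_incr; lra).
      assert (0 <= tt x ^ S N) by (apply pow_le; lra). nra.
Qed.

Lemma labs_nonneg l : 0 <= labs l.
Proof. induction l as [|[[c a] b] l IH]; simpl; [lra|]. pose proof (Rabs_pos c). lra. Qed.

Definition lneg (l : list mono) : list mono := map (fun m => let '(c, a, b) := m in (- c, a, b)) l.

Lemma val_lneg l x : val (lneg l) x = - val l x.
Proof. induction l as [|[[c a] b] l IH]; simpl; [ring|]. rewrite IH. ring. Qed.

Lemma coef_app l1 l2 n k : coef (l1 ++ l2) n k = coef l1 n k + coef l2 n k.
Proof. induction l1; simpl; [ring|]. rewrite IHl1. ring. Qed.

Lemma coef_lneg l n k : coef (lneg l) n k = - coef l n k.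
Proof.
  induction l as [|[[c a] b] l IH]; simpl; [ring|]. rewrite IH.
  destruct (andb (Nat.eqb a k) (Nat.eqb (a + b) n)); ring.
Qed.

Lemma coef_zero l N : Ob (val l) (fun x => tt x ^ S N) ->
  forall n k, (n <= N)%nat -> (k <= N)%nat -> coef l n k = 0.
Proof.
  intros [C [X H]]. apply (U N N (coef l) (Rabs C + labs l) (S N) (Rmax X (exp 1))).
  intros x Hx. pose proof (H x (Rle_trans _ _ _ (Rmax_l _ _) Hx)) as H1.
  assert (Hxe : exp 1 <= x) by (eapply Rle_trans; [apply Rmax_r|exact Hx]).
  destruct (xe_facts x Hxe) as (Hx0&Hl&Hs0&Hst&Ht1).
  pose proof (trunc l N x Hxe) as H2.
  assert (Et : tt x ^ S N = ln x ^ S N / x ^ S N) by (unfold tt, Rdiv; rewrite Rpow_mult_distr, pow_inv; reflexivity).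
  rewrite <- Et.
  replace (DS (coef l) N N x) with (val l x - (val l x - DS (coef l) N N x)) by ring.
  eapply Rle_trans; [apply Rabs_triang|]. rewrite Rabs_Ropp.
  assert (0 <= tt x ^ S N) by (apply pow_le; lra).
  assert (C * tt x ^ S N <= Rabs C * tt x ^ S N) by (apply Rmult_le_compat_r; [auto|apply Rle_abs]).
  lra.
Qed.

Lemma coef_unique l1 l2 N : Ob (fun x => val l1 x - val l2 x) (fun x => tt x ^ S N) ->
  forall n k, (n <= N)%nat -> (k <= N)%nat -> coef l1 n k = coef l2 n k.
Proof.
  intros H n k Hn Hk.
  assert (coef (l1 ++ lneg l2) n k = 0).
  { apply (coef_zero _ N); auto. eapply Ob_ext; [|exact H].
    exists 0. intros. rewrite val_app, val_lneg. ring. }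
  rewrite coef_app, coef_lneg in H0. lra.
Qed.

Lemma coef_gt l n k : (n < k)%nat -> coef l n k = 0.
Proof.
  intros H. induction l as [|[[c a] b] l IH]; simpl; [ring|]. rewrite IH.
  destruct (Nat.eqb a k) eqn:E1; destruct (Nat.eqb (a + b) n) eqn:E2; simpl; try ring.
  apply Nat.eqb_eq in E1. apply Nat.eqb_eq in E2. lia.
Qed.


Lemma sum_trunc f m N : (m <= N)%nat -> (forall k, (m < k)%nat -> (k <= N)%nat -> f k = 0) ->
  sum_f_R0 f N = sum_f_R0 f m.
Proof.
  intros Hm H. induction N.
  - assert (m = 0%nat) by lia. subst. reflexivity.
  - destruct (Nat.eq_dec m (S N)) as [->|Hne]; auto.
    rewrite tech5, IHN; [| lia | intros; apply H; lia]. rewrite (H (S N)) by lia. ring.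
Qed.

Theorem theorem3p1 (ali : R -> R) (Hali : is_ali ali) :
  exists a : nat -> nat -> R,
    forall N : nat,
      exists C X : R,
        forall x : R, X <= x ->
          Rabs (ali (exp x) / (x * exp x) - (1 + asum a x N))
            <= C * (ln x) ^ (S N) / x ^ (S N).
Proof.
  set (Lst := fun N => proj1_sig (constructive_indefinite_description _ (all_E ali Hali N))).
  assert (HL : forall N, Ob (fun x => uu ali x - val (Lst N) x) (fun x => tt x ^ S N)).
  { intros N. unfold Lst. destruct (constructive_indefinite_description _ (all_E ali Hali N)) as [l Hl].
    simpl. exact Hl. }
  exists (fun m k => coef (Lst (S m)) (S m) k).
  intros N. set (l := Lst N).
  destruct (base_u ali Hali) as [Hb _].
  assert (C00 : coef l 0 0 = 1).
  { assert (coef l 0 0 = coef ((1, 0%nat, 0%nat) :: nil) 0 0).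
    { apply (coef_unique _ _ 0); try lia.
      apply (Ob_ext (fun x => (uu ali x - 1) - (uu ali x - val l x))).
      exists 0. intros. simpl. ring.
      apply Ob_minus. apply Ob_tt1'. exact Hb. apply (Ob_tt_mono _ (S N)); [lia| apply HL]. }
    rewrite H. simpl. ring. }
  assert (Cn : forall n k, (1 <= n <= N)%nat -> (k <= n)%nat -> coef l n k = coef (Lst n) n k).
  { intros n k Hn Hk. apply (coef_unique _ _ n); try lia.
    apply (Ob_ext (fun x => (uu ali x - val (Lst n) x) - (uu ali x - val l x))).
    exists 0. intros. ring.
    apply Ob_minus. apply HL. apply (Ob_tt_mono _ (S N)); [lia| apply HL]. }
  assert (HDS : forall x, 0 < x -> DS (coef l) N N x = 1 + asum (fun m k => coef (Lst (S m)) (S m) k) x N).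
  { intros x Hx. unfold DS.
    assert (Hm : forall m, (m <= N)%nat ->
      sum_f_R0 (fun n => sum_f_R0 (fun k => coef l n k * ln x ^ k / x ^ n) N) m
      = 1 + asum (fun m k => coef (Lst (S m)) (S m) k) x m).
    { induction m as [|m IH]; intros Hm.
      - simpl. rewrite (sum_single _ 0).
        + simpl. rewrite C00. field.
        + intros k Hk. rewrite coef_gt by lia. unfold Rdiv. ring.
      - rewrite tech5, IH by lia. cbn [asum]. unfold polyP.
        rewrite (sum_trunc _ (S m)); [| lia |].
        2: { intros k Hk1 Hk2. rewrite coef_gt by lia. unfold Rdiv. ring. }
        assert (E1 : sum_f_R0 (fun k => coef l (S m) k * ln x ^ k / x ^ S m) (S m)
                   = sum_f_R0 (fun k => coef (Lst (S m)) (S m) k * ln x ^ k) (S m) / x ^ S m).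
        { unfold Rdiv. rewrite Rmult_comm, scal_sum. apply sum_eq. intros k Hk.
          rewrite Cn by lia. ring. }
        rewrite E1. ring. }
    apply Hm. lia. }
  destruct (HL N) as [C1 [X1 H1]]. fold l in H1.
  exists (Rabs C1 + labs l), (Rmax X1 (exp 1)). intros x Hx.
  assert (Hxe : exp 1 <= x) by (eapply Rle_trans; [apply Rmax_r|exact Hx]).
  destruct (xe_facts x Hxe) as (Hx0&Hl&Hs0&Hst&Ht1).
  pose proof (H1 x (Rle_trans _ _ _ (Rmax_l _ _) Hx)) as A1.
  pose proof (trunc l N x Hxe) as A2.
  rewrite <- HDS by auto.
  change (ali (exp x) / (x * exp x)) with (uu ali x).
  assert (Et : C1 * tt x ^ S N <= Rabs C1 * tt x ^ S N)
    by (apply Rmult_le_compat_r; [apply pow_le; lra| apply Rle_abs]).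
  assert (Et2 : (Rabs C1 + labs l) * ln x ^ S N / x ^ S N = (Rabs C1 + labs l) * tt x ^ S N)
    by (unfold tt, Rdiv; rewrite Rpow_mult_distr, pow_inv; ring).
  rewrite Et2.
  replace (uu ali x - DS (coef l) N N x) with ((uu ali x - val l x) + (val l x - DS (coef l) N N x)) by ring.
  eapply Rle_trans; [apply Rabs_triang|]. lra.
Qed.
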